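(* For every integer $N\ge1$ there exist $\delta_0>0$ and $C>0$, depending only on $N$, such that the following holds. Let $U_\varphi,V_\varphi\subset\mathbb R^2$ be open with $\overline B_\infty(0,1)=\{\max(|x_1|,|x_2|)\le1\}\subset U_\varphi\cap V_\varphi$, and let $\varphi:U_\varphi\to V_\varphi$ be a $C^{N+1}$ diffeomorphism onto its image with $\varphi(0)=0$, $d\varphi(0)=\mathrm{diag}(2,1/2)$, and $\sup_{U_\varphi}|\partial^\alpha\varphi|\le\delta$ for $2\le|\alpha|\le N+1$, where $0<\delta\le\delta_0$. Let $1\le k\le N$ and let $F\in C^k([-1,1];\mathbb R)$ satisfy $F(0)=0$ and $\|F\|_{C^k}\le1$. Then $$\|\Phi_uF\|_{C^k}\le \tfrac14\|F\|_{C^k}+C\delta.$$ If additionally $\|F\|_{C^{k,1}}\le 1$, then $$\|\Phi_uF\|_{C^{k,1}}\le\tfrac14\|F\|_{C^{k,1}}+C\delta.$$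
   Context: For $H:[-1,1]\to\mathbb R$ let $\mathcal G_u(H):=\{(x_1,x_2):|x_1|\le1,\ x_2=H(x_1)\}$. For $F$ with $F(0)=0$ and $\sup|F'|\le1$, $\Phi_uF:[-1,1]\to\mathbb R$ denotes the (unique) function with $\varphi(\mathcal G_u(F))\cap\{|x_1|\le1\}=\mathcal G_u(\Phi_uF)$ (the graph transform). Seminorms: $\|F\|_{C^k}:=\max_{1\le j\le k}\sup_{[-1,1]}|\partial_{x_1}^jF|$, and $\|F\|_{C^{k,1}}:=\max\big(\|F\|_{C^k},\ \sup_{x_1\ne\tilde x_1}\frac{|\partial^k_{x_1}F(x_1)-\partial^k_{x_1}F(\tilde x_1)|}{|x_1-\tilde x_1|}\big)$. *)

(* Defs.v *)
From Stdlib Require Import Reals List.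
From Coquelicot Require Import Coquelicot.
Open Scope R_scope.

Definition I11 (x : R) : Prop := -1 <= x <= 1.

Definition Binf1 (p : R * R) : Prop := Rabs (fst p) <= 1 /\ Rabs (snd p) <= 1.

Definition pd1 (g : R * R -> R) (p : R * R) : R :=
  Derive (fun t => g (t, snd p)) (fst p).
Definition pd2 (g : R * R -> R) (p : R * R) : R :=
  Derive (fun t => g (fst p, t)) (snd p).

(** Iterated partial derivative along a word of directions
    (false = d/dx1, true = d/dx2); the head of the list is applied last. *)
Fixpoint pdw (w : list bool) (g : R * R -> R) : R * R -> R :=
  match w with
  | nil => g
  | b :: w' => if b then pd2 (pdw w' g) else pd1 (pdw w' g)
  end.

Definition Cm_on (m : nat) (U : R * R -> Prop) (g : R * R -> R) : Prop :=
  (forall w : list bool, (length w < m)%nat -> forall p, U p ->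
     ex_derive (fun t => pdw w g (t, snd p)) (fst p) /\
     ex_derive (fun t => pdw w g (fst p, t)) (snd p)) /\
  (forall w : list bool, (length w <= m)%nat -> forall p, U p ->
     continuous (pdw w g) p).

Definition Cm_on2 (m : nat) (U : R * R -> Prop) (f : R * R -> R * R) : Prop :=
  Cm_on m U (fun p => fst (f p)) /\ Cm_on m U (fun p => snd (f p)).

Definition image2 (f : R * R -> R * R) (U : R * R -> Prop) (q : R * R) : Prop :=
  exists p, U p /\ q = f p.

Definition Cm_diffeo_onto_image (m : nat) (U V : R * R -> Prop)
    (f : R * R -> R * R) : Prop :=
  (forall p, U p -> V (f p)) /\
  Cm_on2 m U f /\
  exists g : R * R -> R * R,
    (forall p, U p -> g (f p) = p) /\
    (forall q, image2 f U q -> f (g q) = q) /\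
    Cm_on2 m (image2 f U) g.

(** One-variable calculus on the closed interval [-1,1]
    (one-sided at the endpoints). *)
Definition is_deriv_I (f f' : R -> R) (x : R) : Prop :=
  filterlim (fun h => (f (x + h) - f x) / h)
    (within (fun h => h <> 0 /\ I11 (x + h)) (locally 0)) (locally (f' x)).

Definition cont_I (f : R -> R) (x : R) : Prop :=
  filterlim f (within I11 (locally x)) (locally (f x)).

(** [Fd] is the list of derivatives of F on [-1,1] up to order k, and
    F is C^k([-1,1]): Fd 0 = F, Fd (j+1) = (Fd j)' on [-1,1] for j < k,
    and Fd j is continuous on [-1,1] for j <= k.  (Derivatives on [-1,1]
    are unique, so Fd j is determined on [-1,1] by F.) *)
Definition Ck_I (k : nat) (F : R -> R) (Fd : nat -> R -> R) : Prop :=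
  (forall x, I11 x -> Fd O x = F x) /\
  (forall j, (j < k)%nat -> forall x, I11 x -> is_deriv_I (Fd j) (Fd (S j)) x) /\
  (forall j, (j <= k)%nat -> forall x, I11 x -> cont_I (Fd j) x).

Definition Ck_norm (k : nat) (Fd : nat -> R -> R) : Rbar :=
  Lub_Rbar (fun y => exists j x, (1 <= j <= k)%nat /\ I11 x /\
                                y = Rabs (Fd j x)).

Definition Ck1_norm (k : nat) (Fd : nat -> R -> R) : Rbar :=
  Lub_Rbar (fun y => (exists j x, (1 <= j <= k)%nat /\ I11 x /\
                                  y = Rabs (Fd j x)) \/
                     (exists x x', I11 x /\ I11 x' /\ x <> x' /\
                        y = Rabs (Fd k x - Fd k x') / Rabs (x - x'))).

(** Graph transform relation:
    phi(G_u(F)) /\ {|x1| <= 1} = G_u(G). *)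
Definition graph_transform (phi : R * R -> R * R) (F G : R -> R) : Prop :=
  forall y : R * R,
    (Rabs (fst y) <= 1 /\ exists x1, Rabs x1 <= 1 /\ phi (x1, F x1) = y) <->
    (Rabs (fst y) <= 1 /\ snd y = G (fst y)).

(* Main.v *)
Require Import Defs.
From Stdlib Require Import Reals List Lra Lia ClassicalEpsilon.
From Coquelicot Require Import Coquelicot.
Open Scope R_scope.

Lemma isd_val (f : R -> R) x l l' : is_derive f x l -> l = l' -> is_derive f x l'.
Proof. intros H ->; exact H. Qed.

Lemma isd_plus (f g : R -> R) x df dg : is_derive f x df -> is_derive g x dg ->
  is_derive (fun t => f t + g t) x (df + dg).
Proof. intros. apply (is_derive_plus f g x df dg); auto. Qed.

Lemma isd_mult (f g : R -> R) x df dg : is_derive f x df -> is_derive g x dg ->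
  is_derive (fun t => f t * g t) x (df * g x + f x * dg).
Proof. intros. apply (is_derive_mult f g x df dg); auto. intros; apply Rmult_comm. Qed.

Lemma isd_scal (f : R -> R) c x df : is_derive f x df ->
  is_derive (fun t => c * f t) x (c * df).
Proof. intros. apply is_derive_scal; auto. Qed.

Lemma isd_const (c x : R) : is_derive (fun _ => c) x 0.
Proof. apply (is_derive_const c x). Qed.

Lemma isd_id (x : R) : is_derive (fun t => t) x 1.
Proof. apply (is_derive_id x). Qed.

Lemma isd_comp (f g : R -> R) x df dg : is_derive f (g x) df -> is_derive g x dg ->
  is_derive (fun t => f (g t)) x (df * dg).
Proof. intros. eapply isd_val. apply (is_derive_comp f g x df dg); auto.
  unfold scal; simpl; unfold mult; simpl; ring. Qed.

Lemma isd_inv (f : R -> R) x df : is_derive f x df -> f x <> 0 ->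
  is_derive (fun t => / f t) x (- df / (f x * f x)).
Proof. intros H H0. eapply isd_val. apply (is_derive_inv f x df H H0).
  simpl. field. auto. Qed.

Lemma isd_cont (f : R -> R) x l : is_derive f x l -> continuous f x.
Proof. intros H. apply (ex_derive_continuous f x). exists l; exact H. Qed.

Lemma mvt_eq (f df : R -> R) (a b : R) :
  (forall s, Rmin a b <= s <= Rmax a b -> is_derive f s (df s)) ->
  exists c, Rmin a b <= c <= Rmax a b /\ f b - f a = df c * (b - a).
Proof.
  intros H. destruct (MVT_gen f a b df) as [c [Hc E]].
  - intros x Hx. apply H. lra.
  - intros x Hx. apply continuity_pt_filterlim. eapply isd_cont. apply H. exact Hx.
  - exists c. split; auto.
Qed.

Lemma mvt_bound (f df : R -> R) (a b M : R) :
  (forall s, Rmin a b <= s <= Rmax a b -> is_derive f s (df s)) ->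
  (forall s, Rmin a b <= s <= Rmax a b -> Rabs (df s) <= M) ->
  Rabs (f b - f a) <= M * Rabs (b - a).
Proof.
  intros H1 H2. destruct (mvt_eq f df a b H1) as [c [Hc E]].
  rewrite E, Rabs_mult. apply Rmult_le_compat_r. apply Rabs_pos. auto.
Qed.

Definition J (x : R) : Prop := -1 < x < 1.

Lemma locally_J x : J x -> locally x J.
Proof.
  intros Hx. unfold J in *.
  assert (Hp : 0 < Rmin (1 - x) (1 + x)) by (apply Rmin_glb_lt; lra).
  exists (mkposreal _ Hp). intros y Hy. simpl in Hy.
  unfold ball in Hy; simpl in Hy; unfold AbsRing_ball, minus, plus, opp in Hy; simpl in Hy.
  apply Rabs_def2 in Hy. destruct Hy.
  pose proof (Rmin_l (1-x) (1+x)). pose proof (Rmin_r (1-x) (1+x)). lra.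
Qed.

Lemma Rmin_Rmax_J a b s : J a -> J b -> Rmin a b <= s <= Rmax a b -> J s.
Proof.
  unfold J; intros. destruct H1. unfold Rmin, Rmax in *.
  destruct (Rle_dec a b); lra.
Qed.

Lemma ballR (x y e : R) : ball x e y <-> Rabs (y - x) < e.
Proof. unfold ball; simpl; unfold AbsRing_ball, minus, plus, opp; simpl. tauto. Qed.

Lemma cont2_eps (f : R*R -> R) p : continuous f p -> forall eps, 0 < eps ->
  exists rho, 0 < rho /\ forall q, Rabs (fst q - fst p) < rho -> Rabs (snd q - snd p) < rho ->
   Rabs (f q - f p) < eps.
Proof.
  intros Hc eps He.
  assert (H := Hc (fun y => ball (f p) eps y)).
  destruct H as [rho Hr].
  - exists (mkposreal eps He). intros y Hy; exact Hy.
  - exists rho. split. apply cond_pos. intros q H1 H2. apply ballR. apply Hr.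
    destruct p, q; split; apply ballR; simpl in *; auto.
Qed.

Lemma cont1_eps (f : R -> R) p : continuous f p -> forall eps, 0 < eps ->
  exists rho, 0 < rho /\ forall q, Rabs (q - p) < rho -> Rabs (f q - f p) < eps.
Proof.
  intros Hc eps He.
  assert (H := Hc (fun y => ball (f p) eps y)).
  destruct H as [rho Hr].
  - exists (mkposreal eps He). intros y Hy; exact Hy.
  - exists rho. split. apply cond_pos. intros q H1. apply ballR. apply Hr. apply ballR; auto.
Qed.

Lemma derI_int f f' x : -1 < x < 1 -> is_deriv_I f f' x -> is_derive f x (f' x).
Proof.
  intros Hx H. apply is_derive_Reals. intros eps Heps.
  unfold is_deriv_I, filterlim, filter_le, filtermap, within in H.
  destruct (H (fun y => ball (f' x) eps y)) as [d Hd].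
  { exists (mkposreal eps Heps). intros y Hy; exact Hy. }
  assert (Hp : 0 < Rmin d (Rmin (1 - x) (1 + x))).
  { apply Rmin_glb_lt. apply cond_pos. apply Rmin_glb_lt; lra. }
  exists (mkposreal _ Hp). simpl. intros h Hh0 Hh.
  pose proof (Rmin_l d (Rmin (1 - x) (1 + x))).
  pose proof (Rmin_r d (Rmin (1 - x) (1 + x))).
  pose proof (Rmin_l (1 - x) (1 + x)). pose proof (Rmin_r (1 - x) (1 + x)).
  apply ballR. apply Hd.
  - apply ballR. rewrite Rminus_0_r. lra.
  - split; auto. unfold I11. apply Rabs_def2 in Hh. lra.
Qed.

Lemma der_I f f' x : is_derive f x (f' x) -> is_deriv_I f f' x.
Proof.
  intros H. apply is_derive_Reals in H.
  unfold is_deriv_I, filterlim, filter_le, filtermap, within.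
  intros P [eps HP].
  destruct (H eps (cond_pos eps)) as [d Hd].
  exists d. intros h Hh [Hh0 _]. apply HP. apply ballR. apply Hd; auto.
  apply ballR in Hh. replace h with (h - 0) by ring. auto.
Qed.

Lemma cont_to_I f x : continuous f x -> cont_I f x.
Proof.
  intros H. unfold cont_I, filterlim, filter_le, filtermap, within.
  intros P HP. specialize (H P HP).
  eapply filter_imp; [|exact H]. simpl. auto.
Qed.

Lemma contI_int f x : -1 < x < 1 -> cont_I f x -> continuous f x.
Proof.
  intros Hx H. unfold cont_I, filterlim, filter_le, filtermap, within in H.
  intros P HP. specialize (H P HP).
  destruct H as [d Hd].
  assert (Hp : 0 < Rmin d (Rmin (1 - x) (1 + x))).
  { apply Rmin_glb_lt. apply cond_pos. apply Rmin_glb_lt; lra. }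
  exists (mkposreal _ Hp). simpl. intros y Hy.
  pose proof (Rmin_l d (Rmin (1 - x) (1 + x))).
  pose proof (Rmin_r d (Rmin (1 - x) (1 + x))).
  pose proof (Rmin_l (1 - x) (1 + x)). pose proof (Rmin_r (1 - x) (1 + x)).
  assert (Hy2 := proj1 (ballR _ _ _) Hy). simpl in Hy2. apply Hd. apply ballR. lra.
  unfold I11. apply Rabs_def2 in Hy2. lra.
Qed.

Lemma chain2 (g : R*R -> R) (u v : R -> R) t0 du dv :
 (forall p, Rabs (fst p) < 1 -> Rabs (snd p) < 1 ->
    ex_derive (fun t => g (t, snd p)) (fst p) /\ ex_derive (fun t => g (fst p, t)) (snd p)) ->
 Rabs (u t0) < 1 -> Rabs (v t0) < 1 -> continuous (pd1 g) (u t0, v t0) ->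
 is_derive u t0 du -> is_derive v t0 dv ->
 is_derive (fun t => g (u t, v t)) t0
   (pd1 g (u t0, v t0) * du + pd2 g (u t0, v t0) * dv).
Proof.
  intros Hex Ha Hb Hc Hu Hv.
  set (a := u t0) in *. set (b := v t0) in *.
  assert (HB : is_derive (fun t => g (a, v t)) t0 (pd2 g (a, b) * dv)).
  { eapply isd_val. apply (isd_comp (fun s => g (a, s)) v t0).
    - apply Derive_correct. apply (Hex (a, b)); simpl; auto.
    - exact Hv.
    - unfold pd2; simpl. reflexivity. }
  set (c := pd1 g (a, b)).
  assert (HA : is_derive (fun t => g (u t, v t) - g (a, v t)) t0 (c * du)).
  { apply is_derive_Reals. intros eps Heps.
    set (eta1 := eps / (2 * (Rabs du + 1))).
    assert (Heta1 : 0 < eta1).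
    { unfold eta1. apply Rdiv_lt_0_compat; auto. pose proof (Rabs_pos du); lra. }
    destruct (cont2_eps (pd1 g) (a, b) Hc eta1 Heta1) as [rho1 [Hrho1 Hr1]].
    fold c in Hr1.
    set (eta2 := Rmin 1 (eps / (2 * (Rabs c + 1)))).
    assert (Heta2 : 0 < eta2).
    { unfold eta2. apply Rmin_glb_lt. lra. apply Rdiv_lt_0_compat; auto. pose proof (Rabs_pos c); lra. }
    assert (Hu' := proj1 (is_derive_Reals _ _ _) Hu).
    assert (Hv' := proj1 (is_derive_Reals _ _ _) Hv).
    destruct (Hu' eta2 Heta2) as [d2 Hd2].
    destruct (Hv' 1 Rlt_0_1) as [d3 Hd3].
    set (m := Rmin rho1 (Rmin (1 - Rabs a) (1 - Rabs b))).
    assert (Hm : 0 < m).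
    { unfold m. apply Rmin_glb_lt; auto. apply Rmin_glb_lt; lra. }
    assert (Hm1 : m <= rho1) by apply Rmin_l.
    assert (Hm2 : m <= 1 - Rabs a).
    { eapply Rle_trans. apply Rmin_r. apply Rmin_l. }
    assert (Hm3 : m <= 1 - Rabs b).
    { eapply Rle_trans. apply Rmin_r. apply Rmin_r. }
    pose proof (Rabs_pos du). pose proof (Rabs_pos dv). pose proof (Rabs_pos c).
    set (del := Rmin (Rmin d2 d3) (Rmin (m / (Rabs du + 2)) (m / (Rabs dv + 2)))).
    assert (Hdel : 0 < del).
    { unfold del. apply Rmin_glb_lt; apply Rmin_glb_lt; try apply cond_pos;
      apply Rdiv_lt_0_compat; lra. }
    exists (mkposreal _ Hdel). simpl. intros h Hh0 Hh.
    assert (E1 : del <= d2).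
    { unfold del. eapply Rle_trans. apply Rmin_l. apply Rmin_l. }
    assert (E2 : del <= d3).
    { unfold del. eapply Rle_trans. apply Rmin_l. apply Rmin_r. }
    assert (E3 : del <= m / (Rabs du + 2)).
    { unfold del. eapply Rle_trans. apply Rmin_r. apply Rmin_l. }
    assert (E4 : del <= m / (Rabs dv + 2)).
    { unfold del. eapply Rle_trans. apply Rmin_r. apply Rmin_r. }
    specialize (Hd2 h Hh0 ltac:(lra)). specialize (Hd3 h Hh0 ltac:(lra)).
    fold a in Hd2. fold b in Hd3.
    set (uh := u (t0 + h)) in *. set (vh := v (t0 + h)) in *.
    set (D := (uh - a) / h) in *.
    assert (Hha : 0 < Rabs h) by (apply Rabs_pos_lt; auto).
    assert (HD : Rabs D <= Rabs du + 1).
    { assert (eta2 <= 1) by apply Rmin_l.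
      pose proof (Rabs_triang_inv D du). lra. }
    assert (Huh : Rabs (uh - a) < m).
    { replace (uh - a) with (D * h) by (unfold D; field; auto).
      rewrite Rabs_mult.
      apply Rle_lt_trans with ((Rabs du + 1) * Rabs h).
      apply Rmult_le_compat_r; lra.
      apply Rle_lt_trans with ((Rabs du + 2) * (m / (Rabs du + 2)) - Rabs h).
      2:{ replace ((Rabs du + 2) * (m / (Rabs du + 2))) with m by (field; lra). lra. }
      assert (Rabs h < m / (Rabs du + 2)) by lra.
      nra. }
    assert (Hvh : Rabs (vh - b) < m).
    { set (D' := (vh - b) / h) in *.
      assert (HD' : Rabs D' <= Rabs dv + 1).
      { pose proof (Rabs_triang_inv D' dv). lra. }
      replace (vh - b) with (D' * h) by (unfold D'; field; auto).
      rewrite Rabs_mult.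
      apply Rle_lt_trans with ((Rabs dv + 1) * Rabs h).
      apply Rmult_le_compat_r; lra.
      apply Rle_lt_trans with ((Rabs dv + 2) * (m / (Rabs dv + 2)) - Rabs h).
      2:{ replace ((Rabs dv + 2) * (m / (Rabs dv + 2))) with m by (field; lra). lra. }
      assert (Rabs h < m / (Rabs dv + 2)) by lra.
      nra. }
    assert (Hvh1 : Rabs vh < 1).
    { pose proof (Rabs_triang_inv vh b). lra. }
    assert (Hmv : forall s, Rmin a uh <= s <= Rmax a uh -> is_derive (fun s => g (s, vh)) s (pd1 g (s, vh))).
    { intros s Hs. apply Derive_correct.
      assert (Rabs (s - a) <= Rabs (uh - a)).
      { unfold Rmin, Rmax in Hs. destruct (Rle_dec a uh);
        unfold Rabs; repeat destruct Rcase_abs; lra. }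
      apply (Hex (s, vh)); simpl; auto.
      pose proof (Rabs_triang_inv s a). lra. }
    destruct (mvt_eq (fun s => g (s, vh)) (fun s => pd1 g (s, vh)) a uh Hmv) as [xi [Hxi Exi]].
    assert (Hxia : Rabs (xi - a) <= Rabs (uh - a)).
    { unfold Rmin, Rmax in Hxi. destruct (Rle_dec a uh);
      unfold Rabs; repeat destruct Rcase_abs; lra. }
    assert (HP := Hr1 (xi, vh) ltac:(simpl; lra) ltac:(simpl; lra)).
    simpl in HP. set (P := pd1 g (xi, vh)) in *.
    replace (t0 + 0) with t0 in * by ring.
    change (Rabs ((g (uh, vh) - g (a, vh) - (g (a, b) - g (a, b))) / h - c * du) < eps).
    replace ((g (uh, vh) - g (a, vh) - (g (a, b) - g (a, b))) / h - c * du)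
      with ((P - c) * D + c * (D - du)).
    2:{ rewrite Exi. unfold D. field. auto. }
    eapply Rle_lt_trans. apply Rabs_triang. rewrite !Rabs_mult.
    assert (Rabs (P - c) * Rabs D <= eta1 * (Rabs du + 1)).
    { apply Rmult_le_compat; try apply Rabs_pos; lra. }
    assert (eta1 * (Rabs du + 1) = eps / 2).
    { unfold eta1. field. lra. }
    assert (Rabs c * Rabs (D - du) <= Rabs c * (eps / (2 * (Rabs c + 1)))).
    { apply Rmult_le_compat_l. lra.
      assert (eta2 <= eps / (2 * (Rabs c + 1))) by apply Rmin_r. lra. }
    assert (Rabs c * (eps / (2 * (Rabs c + 1))) < eps / 2).
    { replace (Rabs c * (eps / (2 * (Rabs c + 1)))) with ((eps/2) * (Rabs c / (Rabs c + 1))) by (field; lra).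
      assert (Rabs c / (Rabs c + 1) < 1).
      { apply Rmult_lt_reg_r with (Rabs c + 1). lra. unfold Rdiv. rewrite Rmult_assoc, Rinv_l; lra. }
      nra. }
    lra. }
  eapply isd_val.
  apply (is_derive_ext (fun t => (g (u t, v t) - g (a, v t)) + g (a, v t)) (fun t => g (u t, v t))).
  { intros t. simpl. ring. }
  apply isd_plus; [exact HA | exact HB]. reflexivity.
Qed.

Definition bnd (A : R) (u : R -> R) := forall x, J x -> Rabs (u x) <= A.
Definition cnt (u : R -> R) := forall x, J x -> continuous u x.
Definition lip (A : R) (u : R -> R) :=
  forall x y, J x -> J y -> Rabs (u x - u y) <= A * Rabs (x - y).
Definition dv (u u' : R -> R) := forall x, J x -> is_derive u x (u' x).

Fixpoint Bc (L : bool) (r : nat) (A : R) (u : R -> R) : Prop :=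
  match r with
  | O => bnd A u /\ cnt u /\ (L = true -> lip A u)
  | S r' => bnd A u /\ cnt u /\ exists u', dv u u' /\ Bc L r' A u'
  end.

Lemma J0 : J 0. Proof. unfold J; lra. Qed.

Lemma Bc_bnd L r A u : Bc L r A u -> bnd A u.
Proof. destruct r; simpl; tauto. Qed.
Lemma Bc_cnt L r A u : Bc L r A u -> cnt u.
Proof. destruct r; simpl; tauto. Qed.
Lemma Bc_nonneg L r A u : Bc L r A u -> 0 <= A.
Proof. intros H. apply Bc_bnd in H. specialize (H 0 J0). pose proof (Rabs_pos (u 0)). lra. Qed.

Lemma lip_of_deriv A u u' : dv u u' -> bnd A u' -> lip A u.
Proof.
  intros Hd Hb x y Hx Hy. apply (mvt_bound u u' y x A).
  - intros s Hs. apply Hd. eapply Rmin_Rmax_J; [exact Hy | exact Hx | exact Hs].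
  - intros s Hs. apply Hb. eapply Rmin_Rmax_J; [exact Hy | exact Hx | exact Hs].
Qed.

Lemma cnt_of_dv u u' : dv u u' -> cnt u.
Proof. intros H x Hx. eapply isd_cont. apply H; auto. Qed.

Lemma Bc_S_intro L r A u u' : bnd A u -> dv u u' -> Bc L r A u' -> Bc L (S r) A u.
Proof. intros. simpl. split; auto. split. eapply cnt_of_dv; eauto. exists u'; auto. Qed.

Lemma Bc_0_intro L A u u' : bnd A u -> dv u u' -> bnd A u' -> Bc L 0 A u.
Proof. intros. simpl. split; auto. split. eapply cnt_of_dv; eauto. intros _. eapply lip_of_deriv; eauto. Qed.

Lemma Bc_down L r A u : Bc L (S r) A u -> Bc L r A u.
Proof.
  revert A u. induction r; intros A u H.
  - destruct H as [Hb [Hc [u' [Hd H']]]]. simpl. split; auto. split; auto.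
    intros _. eapply lip_of_deriv; eauto. eapply Bc_bnd; eauto.
  - destruct H as [Hb [Hc [u' [Hd H']]]]. simpl. split; auto. split; auto.
    exists u'. split; auto.
Qed.

Lemma Bc_le L r r' A u : (r' <= r)%nat -> Bc L r A u -> Bc L r' A u.
Proof.
  intros Hle. induction Hle; auto. intros H. apply IHHle. apply Bc_down; auto.
Qed.

Lemma Bc_mono L r A A' u : A <= A' -> Bc L r A u -> Bc L r A' u.
Proof.
  revert A A' u. induction r; intros A A' u Hl H.
  - destruct H as [Hb [Hc Hlp]]. split; [|split]; auto.
    + intros x Hx. specialize (Hb x Hx). lra.
    + intros HL x y Hx Hy. specialize (Hlp HL x y Hx Hy). pose proof (Rabs_pos (x - y)). nra.
  - destruct H as [Hb [Hc [u' [Hd H']]]]. split; [|split]; auto.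
    + intros x Hx. specialize (Hb x Hx). lra.
    + exists u'. split; auto. eapply IHr; eauto.
Qed.

Lemma dv_ext u v u' : (forall x, J x -> u x = v x) -> dv u u' -> dv v u'.
Proof.
  intros He Hd x Hx. eapply is_derive_ext_loc; [|apply Hd; auto].
  eapply filter_imp; [|apply locally_J; exact Hx]. simpl. intros y Hy. apply He; auto.
Qed.

Lemma Bc_ext L r A u v : (forall x, J x -> u x = v x) -> Bc L r A u -> Bc L r A v.
Proof.
  intros He H. assert (Hb : bnd A v).
  { intros x Hx. rewrite <- He; auto. eapply Bc_bnd; eauto. }
  assert (Hc : cnt v).
  { intros x Hx. eapply continuous_ext_loc; [|eapply Bc_cnt; eauto].
    eapply filter_imp; [|apply locally_J; exact Hx]. simpl. intros y Hy. apply He; auto. }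
  revert H. destruct r; intros H.
  - destruct H as [_ [_ Hl]]. split; auto. split; auto. intros HL x y Hx Hy.
    rewrite <- !He; auto. apply Hl; auto.
  - destruct H as [_ [_ [u' [Hd H']]]]. split; auto. split; auto. exists u'. split; auto.
    eapply dv_ext; eauto.
Qed.

Lemma Bc_const L r c A : Rabs c <= A -> Bc L r A (fun _ => c).
Proof.
  revert c. induction r; intros c Hc.
  - split; [|split].
    + intros x _; auto.
    + intros x _. apply continuous_const.
    + intros _ x y _ _. unfold Rminus. rewrite Rplus_opp_r, Rabs_R0.
      pose proof (Rabs_pos c). pose proof (Rabs_pos (x + - y)). nra.
  - apply Bc_S_intro with (u' := fun _ => 0).
    + intros x _; auto.
    + intros x _. apply isd_const.
    + apply IHr. rewrite Rabs_R0. pose proof (Rabs_pos c); lra.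
Qed.

Lemma Bc_plus L r A B u v : Bc L r A u -> Bc L r B v -> Bc L r (A + B) (fun x => u x + v x).
Proof.
  revert A B u v. induction r; intros A B u v Hu Hv.
  - destruct Hu as [Hb1 [Hc1 Hl1]]. destruct Hv as [Hb2 [Hc2 Hl2]].
    split; [|split].
    + intros x Hx. eapply Rle_trans. apply Rabs_triang. apply Rplus_le_compat; auto.
    + intros x Hx. apply (continuous_plus u v); auto.
    + intros HL x y Hx Hy. specialize (Hl1 HL x y Hx Hy). specialize (Hl2 HL x y Hx Hy).
      replace (u x + v x - (u y + v y)) with ((u x - u y) + (v x - v y)) by ring.
      eapply Rle_trans. apply Rabs_triang. lra.
  - destruct Hu as [Hb1 [Hc1 [u' [Hd1 H1]]]]. destruct Hv as [Hb2 [Hc2 [v' [Hd2 H2]]]].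
    apply Bc_S_intro with (u' := fun x => u' x + v' x).
    + intros x Hx. eapply Rle_trans. apply Rabs_triang. apply Rplus_le_compat; auto.
    + intros x Hx. apply isd_plus; auto.
    + apply IHr; auto.
Qed.

Lemma Bc_scal L r A c u : Bc L r A u -> Bc L r (Rabs c * A) (fun x => c * u x).
Proof.
  revert A u. induction r; intros A u Hu.
  - destruct Hu as [Hb1 [Hc1 Hl1]]. split; [|split].
    + intros x Hx. rewrite Rabs_mult. apply Rmult_le_compat_l. apply Rabs_pos. auto.
    + intros x Hx. apply (continuous_mult (fun _ => c) u). apply continuous_const. auto.
    + intros HL x y Hx Hy. specialize (Hl1 HL x y Hx Hy).
      replace (c * u x - c * u y) with (c * (u x - u y)) by ring.
      rewrite Rabs_mult. rewrite Rmult_assoc. apply Rmult_le_compat_l. apply Rabs_pos. auto.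
  - destruct Hu as [Hb1 [Hc1 [u' [Hd1 H1]]]].
    apply Bc_S_intro with (u' := fun x => c * u' x).
    + intros x Hx. rewrite Rabs_mult. apply Rmult_le_compat_l. apply Rabs_pos. auto.
    + intros x Hx. apply isd_scal; auto.
    + apply IHr; auto.
Qed.

Lemma Bc_mult L r A B u v : Bc L r A u -> Bc L r B v ->
  Bc L r (2 ^ (S r) * A * B) (fun x => u x * v x).
Proof.
  revert A B u v. induction r; intros A B u v Hu Hv.
  - pose proof (Bc_nonneg _ _ _ _ Hu). pose proof (Bc_nonneg _ _ _ _ Hv).
    destruct Hu as [Hb1 [Hc1 Hl1]]. destruct Hv as [Hb2 [Hc2 Hl2]].
    split; [|split].
    + intros x Hx. rewrite Rabs_mult. specialize (Hb1 x Hx). specialize (Hb2 x Hx).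
      pose proof (Rabs_pos (u x)). pose proof (Rabs_pos (v x)). simpl. nra.
    + intros x Hx. apply (continuous_mult u v); auto.
    + intros HL x y Hx Hy. specialize (Hl1 HL x y Hx Hy). specialize (Hl2 HL x y Hx Hy).
      replace (u x * v x - u y * v y) with (u x * (v x - v y) + v y * (u x - u y)) by ring.
      eapply Rle_trans. apply Rabs_triang. rewrite !Rabs_mult.
      specialize (Hb1 x Hx). specialize (Hb2 y Hy).
      pose proof (Rabs_pos (u x)). pose proof (Rabs_pos (v y)).
      pose proof (Rabs_pos (v x - v y)). pose proof (Rabs_pos (u x - u y)).
      pose proof (Rabs_pos (x - y)).
      assert (Rabs (u x) * Rabs (v x - v y) <= A * (B * Rabs (x - y))) by (apply Rmult_le_compat; auto).
      assert (Rabs (v y) * Rabs (u x - u y) <= B * (A * Rabs (x - y))) by (apply Rmult_le_compat; auto).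
      simpl. nra.
  - pose proof (Bc_nonneg _ _ _ _ Hu). pose proof (Bc_nonneg _ _ _ _ Hv).
    pose proof (Bc_down _ _ _ _ Hu) as Hu0. pose proof (Bc_down _ _ _ _ Hv) as Hv0.
    destruct Hu as [Hb1 [Hc1 [u' [Hd1 H1]]]]. destruct Hv as [Hb2 [Hc2 [v' [Hd2 H2]]]].
    apply Bc_S_intro with (u' := fun x => u' x * v x + u x * v' x).
    + intros x Hx. rewrite Rabs_mult. specialize (Hb1 x Hx). specialize (Hb2 x Hx).
      pose proof (Rabs_pos (u x)). pose proof (Rabs_pos (v x)).
      assert (1 <= 2 ^ S (S r)) by (apply pow_R1_Rle; lra).
      assert (Rabs (u x) * Rabs (v x) <= A * B) by (apply Rmult_le_compat; auto).
      assert (0 <= A * B) by nra. nra.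
    + intros x Hx. apply isd_mult; auto.
    + replace (2 ^ S (S r) * A * B) with (2 ^ S r * A * B + 2 ^ S r * A * B) by (simpl; ring).
      apply Bc_plus; auto.
Qed.

Lemma Rabs_def2b a b : Rabs a <= b -> -b <= a <= b.
Proof. unfold Rabs; destruct Rcase_abs; lra. Qed.

Definition PP (N : nat) : R := 2 ^ (S N).

Lemma PP_ge2 N : 2 <= PP N.
Proof. unfold PP. simpl. assert (1 <= 2 ^ N) by (apply pow_R1_Rle; lra). lra. Qed.

Lemma pow2_le r N : (r <= N)%nat -> 2 ^ (S r) <= PP N.
Proof. intros. unfold PP. apply Rle_pow. lra. lia. Qed.

Lemma Bc_multP L N r A B u v : (r <= N)%nat -> Bc L r A u -> Bc L r B v ->
  Bc L r (PP N * A * B) (fun x => u x * v x).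
Proof.
  intros Hr Hu Hv. pose proof (Bc_nonneg _ _ _ _ Hu). pose proof (Bc_nonneg _ _ _ _ Hv).
  eapply Bc_mono; [|apply Bc_mult; eauto].
  pose proof (pow2_le r N Hr). assert (0 <= A * B) by nra.
  rewrite !Rmult_assoc. apply Rmult_le_compat_r; auto.
Qed.

Lemma recip_val e (a : R) : Rabs a <= e -> e <= / 8 ->
  Rabs (/ (2 + a) - / 2) <= e / 3 /\ 0 < 2 + a.
Proof.
  intros H1 H2. apply Rabs_def2b in H1. split; [|lra].
  replace (/ (2 + a) - / 2) with (- a / (2 * (2 + a))) by (field; lra).
  unfold Rdiv. rewrite Rabs_mult, Rabs_Ropp, Rabs_inv, (Rabs_pos_eq (2 * (2 + a))) by lra.
  apply Rle_trans with (Rabs a * / 3).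
  - apply Rmult_le_compat_l. apply Rabs_pos. apply Rinv_le_contravar; lra.
  - apply Rmult_le_compat_r. lra. apply Rabs_le; lra.
Qed.

Lemma Bc_recip L N r e eps : (r <= N)%nat -> e <= / (2 * PP N ^ 2) -> Bc L r e eps ->
  Bc L r (PP N ^ 2 * e) (fun x => / (2 + eps x) - / 2).
Proof.
  pose proof (PP_ge2 N) as HP.
  assert (HP2 : 4 <= PP N ^ 2) by (simpl; nra).
  intros Hr He. revert eps. induction r; intros eps H.
  - pose proof (Bc_nonneg _ _ _ _ H) as He0.
    assert (He8 : e <= / 8).
    { eapply Rle_trans. exact He. apply Rinv_le_contravar; lra. }
    destruct H as [Hb [Hc Hl]]. split; [|split].
    + intros x Hx. destruct (recip_val e (eps x) (Hb x Hx) He8). nra.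
    + intros x Hx. destruct (recip_val e (eps x) (Hb x Hx) He8).
      apply (continuous_plus (fun x => / (2 + eps x)) (fun _ => - / 2)).
      apply continuous_Rinv_comp. apply (continuous_plus (fun _ => 2) eps).
      apply continuous_const. auto. simpl. lra. apply continuous_const.
    + intros HL x y Hx Hy. specialize (Hl HL x y Hx Hy).
      destruct (recip_val e (eps x) (Hb x Hx) He8).
      destruct (recip_val e (eps y) (Hb y Hy) He8).
      replace (/ (2 + eps x) - / 2 - (/ (2 + eps y) - / 2))
        with ((eps y - eps x) * / ((2 + eps x) * (2 + eps y))) by (field; lra).
      rewrite Rabs_mult, Rabs_inv, (Rabs_pos_eq ((2 + eps x) * (2 + eps y))) by nra.
      rewrite <- Rabs_Ropp. replace (- (eps y - eps x)) with (eps x - eps y) by ring.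
      apply Rle_trans with (e * Rabs (x - y) * 1).
      apply Rmult_le_compat; auto. apply Rabs_pos. left; apply Rinv_0_lt_compat; nra.
      rewrite <- Rinv_1. apply Rinv_le_contravar. lra.
      assert (Rabs (eps x) <= e) by auto. assert (Rabs (eps y) <= e) by auto.
      apply Rabs_def2b in H3. apply Rabs_def2b in H4. nra.
      pose proof (Rabs_pos (x - y)). assert (0 <= e * Rabs (x - y)) by nra. replace (PP N ^ 2 * e * Rabs (x - y)) with (PP N ^ 2 * (e * Rabs (x - y))) by ring. nra.
  - pose proof (Bc_nonneg _ _ _ _ H) as He0.
    assert (He8 : e <= / 8).
    { eapply Rle_trans. exact He. apply Rinv_le_contravar; lra. }
    assert (IH := IHr ltac:(lia) eps (Bc_down _ _ _ _ H)).
    destruct H as [Hb [Hc [e' [Hd H']]]].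
    set (w := fun x => / (2 + eps x)).
    apply Bc_S_intro with (u' := fun x => (-1) * (e' x * (w x * w x))).
    + intros x Hx. destruct (recip_val e (eps x) (Hb x Hx) He8). nra.
    + intros x Hx. destruct (recip_val e (eps x) (Hb x Hx) He8).
      eapply isd_val.
      { apply (isd_plus (fun x => / (2 + eps x)) (fun _ => - / 2)).
        - apply (isd_inv (fun x => 2 + eps x)).
          + apply (isd_plus (fun _ => 2) eps). apply isd_const. apply Hd; auto.
          + simpl; lra.
        - apply isd_const. }
      match goal with |- ?a = ?b => change (@eq R a b) end. unfold w. field. lra.
    + assert (Hw1 : Bc L r 1 w).
      { eapply Bc_mono; [|eapply Bc_ext; [|apply Bc_plus; [exact IH | apply (Bc_const L r (/2) (/2))]]].
        - assert (PP N ^ 2 * e <= / 2).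
          { apply Rle_trans with (PP N ^ 2 * / (2 * PP N ^ 2)).
            apply Rmult_le_compat_l; lra. right. field. lra. }
          lra.
        - intros x Hx. unfold w. ring.
        - rewrite Rabs_pos_eq; lra. }
      assert (Hww := Bc_multP L N r 1 1 w w ltac:(lia) Hw1 Hw1).
      assert (Hew := Bc_multP L N r e (PP N * 1 * 1) e' (fun x => w x * w x) ltac:(lia) H' Hww).
      assert (Hs := Bc_scal L r _ (-1) _ Hew).
      eapply Bc_mono; [|exact Hs].
      replace (Rabs (-1)) with 1 by (unfold Rabs; destruct Rcase_abs; lra). right. simpl. ring.
Qed.

Definition KQ (N r : nat) : R := 2 * (1 + PP N) ^ r.
Definition KE (N r : nat) : R := 2 + KQ N r.

Lemma J_I11 x : J x -> I11 x.
Proof. unfold J, I11; lra. Qed.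

Lemma J_abs x : J x -> Rabs x < 1.
Proof. unfold J; intros; apply Rabs_def1; lra. Qed.

Section SecF.
Variables (k : nat) (F : R -> R) (Fd : nat -> R -> R) (L : bool).
Hypothesis Hk : (1 <= k)%nat.
Hypothesis HF : Ck_I k F Fd.
Hypothesis HF0 : F 0 = 0.
Hypothesis HFb : forall j x, (1 <= j <= k)%nat -> I11 x -> Rabs (Fd j x) <= 1.
Hypothesis HFL : L = true -> lip 1 (Fd k).

Lemma Fd_dv j x : (j < k)%nat -> J x -> is_derive (Fd j) x (Fd (S j) x).
Proof.
  intros Hj Hx. destruct HF as [_ [H2 _]]. apply derI_int. exact Hx. apply H2; auto.
  apply J_I11; auto.
Qed.

Lemma F_dv x : J x -> is_derive F x (Fd 1 x).
Proof.
  intros Hx. eapply is_derive_ext_loc; [|apply Fd_dv; auto].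
  eapply filter_imp; [|apply locally_J; exact Hx]. simpl. intros y Hy.
  destruct HF as [H1 _]. apply H1. apply J_I11; auto.
Qed.

Lemma Fd_cont j x : (j <= k)%nat -> J x -> continuous (Fd j) x.
Proof.
  intros Hj Hx. destruct HF as [_ [_ H3]]. apply contI_int; auto. apply H3; auto.
  apply J_I11; auto.
Qed.

Lemma F_small x : J x -> Rabs (F x) <= Rabs x.
Proof.
  intros Hx. replace (F x) with (F x - F 0) by (rewrite HF0; ring).
  replace (Rabs x) with (1 * Rabs (x - 0)) by (rewrite Rminus_0_r; ring).
  apply mvt_bound with (df := Fd 1).
  - intros s Hs. apply F_dv. eapply Rmin_Rmax_J; [apply J0 | exact Hx | exact Hs].
  - intros s Hs. apply HFb. lia. apply J_I11. eapply Rmin_Rmax_J; [apply J0 | exact Hx | exact Hs].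
Qed.

Lemma Bc_Fd r : forall j, (1 <= j)%nat -> (j + r = k)%nat -> Bc L r 1 (Fd j).
Proof.
  induction r; intros j Hj Hjr.
  - replace j with k by lia. split; [|split].
    + intros x Hx. apply HFb. lia. apply J_I11; auto.
    + intros x Hx. apply Fd_cont; auto.
    + auto.
  - apply Bc_S_intro with (u' := Fd (S j)).
    + intros x Hx. apply HFb. lia. apply J_I11; auto.
    + intros x Hx. apply Fd_dv; auto. lia.
    + apply IHr; lia.
Qed.

End SecF.

Section SecG.
Variables (N k : nat) (U : R * R -> Prop) (g : R * R -> R) (F : R -> R) (Fd : nat -> R -> R)
  (delta : R) (L : bool).
Hypothesis Hk : (1 <= k <= N)%nat.
Hypothesis HU : forall p, Binf1 p -> U p.
Hypothesis HCm : Cm_on (S N) U g.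
Hypothesis Hbd : forall w, (2 <= length w <= S N)%nat -> forall p, U p -> Rabs (pdw w g p) <= delta.
Hypothesis Hdel : 0 < delta.
Hypothesis HF : Ck_I k F Fd.
Hypothesis HF0 : F 0 = 0.
Hypothesis HFb : forall j x, (1 <= j <= k)%nat -> I11 x -> Rabs (Fd j x) <= 1.
Hypothesis HFL : L = true -> lip 1 (Fd k).

Definition Qf (w : list bool) (x : R) : R := pdw w g (x, F x).

Lemma ptU x : J x -> U (x, F x).
Proof.
  intros Hx. apply HU. split; simpl. left; apply J_abs; auto.
  eapply Rle_trans. apply F_small with (k := k) (Fd := Fd); auto; lia.
  left; apply J_abs; auto.
Qed.

Lemma exd_w w p : (length w < S N)%nat -> U p ->
  ex_derive (fun t => pdw w g (t, snd p)) (fst p) /\ ex_derive (fun t => pdw w g (fst p, t)) (snd p).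
Proof. intros. destruct HCm as [H1 _]. apply H1; auto. Qed.

Lemma Qf_dv w x : (length w <= N)%nat -> J x ->
  is_derive (Qf w) x (Qf (false :: w) x + Qf (true :: w) x * Fd 1 x).
Proof.
  intros Hw Hx. unfold Qf.
  eapply isd_val.
  { apply (chain2 (pdw w g) (fun t => t) F x 1 (Fd 1 x)).
    - intros p Hp1 Hp2. apply exd_w. lia. apply HU. split; lra.
    - apply J_abs; auto.
    - eapply Rle_lt_trans. apply F_small with (k := k) (Fd := Fd); auto; lia. apply J_abs; auto.
    - destruct HCm as [_ H2]. apply (H2 (false :: w)). simpl; lia. apply ptU; auto.
    - apply isd_id.
    - apply F_dv with (k := k); auto; lia. }
  simpl. ring.
Qed.

Lemma Bc_Q r : forall w, (2 <= length w)%nat -> (r + length w <= N)%nat -> (r <= k)%nat ->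
  Bc L r (KQ N r * delta) (Qf w).
Proof.
  assert (HP := PP_ge2 N).
  induction r; intros w Hw1 Hw2 Hr.
  - unfold KQ. simpl. apply Bc_0_intro with (u' := fun x => Qf (false :: w) x + Qf (true :: w) x * Fd 1 x).
    + intros x Hx. unfold Qf. eapply Rle_trans. apply Hbd. lia. apply ptU; auto. lra.
    + intros x Hx. exact (Qf_dv w x ltac:(lia) Hx).
    + intros x Hx. eapply Rle_trans. apply Rabs_triang. rewrite Rabs_mult.
      assert (Rabs (Qf (false :: w) x) <= delta) by (apply Hbd; [simpl; lia | apply ptU; auto]).
      assert (Rabs (Qf (true :: w) x) <= delta) by (apply Hbd; [simpl; lia | apply ptU; auto]).
      assert (Rabs (Fd 1 x) <= 1) by (apply HFb; [lia | apply J_I11; auto]).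
      pose proof (Rabs_pos (Fd 1 x)). pose proof (Rabs_pos (Qf (true :: w) x)). nra.
  - apply Bc_S_intro with (u' := fun x => Qf (false :: w) x + Qf (true :: w) x * Fd 1 x).
    + intros x Hx. unfold Qf. eapply Rle_trans. apply Hbd. lia. apply ptU; auto.
      unfold KQ. assert (1 <= (1 + PP N) ^ S r) by (apply pow_R1_Rle; lra). nra.
    + intros x Hx. exact (Qf_dv w x ltac:(lia) Hx).
    + assert (H1 := IHr (false :: w) ltac:(simpl; lia) ltac:(simpl; lia) ltac:(lia)).
      assert (H2 := IHr (true :: w) ltac:(simpl; lia) ltac:(simpl; lia) ltac:(lia)).
      assert (H3 := Bc_le L (k - 1) r _ _ ltac:(lia) (Bc_Fd k F Fd L ltac:(lia) HF HFb HFL (k - 1) 1 ltac:(lia) ltac:(lia))).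
      assert (H4 := Bc_multP L N r _ _ _ _ ltac:(lia) H2 H3).
      assert (H5 := Bc_plus L r _ _ _ _ H1 H4).
      eapply Bc_mono; [|exact H5]. unfold KQ. simpl. right. ring.
Qed.

Lemma seg1 w c M a b y : (length w < S N)%nat -> Rabs a <= 1 -> Rabs b <= 1 -> Rabs y <= 1 ->
  (forall s, Rabs s <= 1 -> Rabs (pdw (false :: w) g (s, y) - c) <= M) ->
  Rabs (pdw w g (b, y) - pdw w g (a, y) - c * (b - a)) <= M * Rabs (b - a).
Proof.
  intros Hw Ha Hb Hy HM.
  assert (Hs : forall s, Rmin a b <= s <= Rmax a b -> Rabs s <= 1).
  { intros s Hs. apply Rabs_def2b in Ha. apply Rabs_def2b in Hb. apply Rabs_le.
    unfold Rmin, Rmax in Hs. destruct (Rle_dec a b); lra. }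
  replace (pdw w g (b, y) - pdw w g (a, y) - c * (b - a))
    with ((pdw w g (b, y) + - c * b) - (pdw w g (a, y) + - c * a)) by ring.
  apply (mvt_bound (fun s => pdw w g (s, y) + - c * s) (fun s => pdw (false :: w) g (s, y) - c)).
  - intros s Hs'. eapply isd_val.
    { apply (isd_plus (fun s => pdw w g (s, y)) (fun s => - c * s)).
      - apply Derive_correct. apply (exd_w w (s, y)); auto. apply HU. split; simpl; auto.
      - apply isd_scal. apply isd_id. }
    match goal with |- ?a = ?b => change (@eq R a b) end. simpl. unfold pd1, pd2. simpl. ring.
  - intros s Hs'. apply HM. auto.
Qed.

Lemma seg2 w c M a b x : (length w < S N)%nat -> Rabs a <= 1 -> Rabs b <= 1 -> Rabs x <= 1 ->
  (forall s, Rabs s <= 1 -> Rabs (pdw (true :: w) g (x, s) - c) <= M) ->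
  Rabs (pdw w g (x, b) - pdw w g (x, a) - c * (b - a)) <= M * Rabs (b - a).
Proof.
  intros Hw Ha Hb Hy HM.
  assert (Hs : forall s, Rmin a b <= s <= Rmax a b -> Rabs s <= 1).
  { intros s Hs. apply Rabs_def2b in Ha. apply Rabs_def2b in Hb. apply Rabs_le.
    unfold Rmin, Rmax in Hs. destruct (Rle_dec a b); lra. }
  replace (pdw w g (x, b) - pdw w g (x, a) - c * (b - a))
    with ((pdw w g (x, b) + - c * b) - (pdw w g (x, a) + - c * a)) by ring.
  apply (mvt_bound (fun s => pdw w g (x, s) + - c * s) (fun s => pdw (true :: w) g (x, s) - c)).
  - intros s Hs'. eapply isd_val.
    { apply (isd_plus (fun s => pdw w g (x, s)) (fun s => - c * s)).
      - apply Derive_correct. apply (exd_w w (x, s)); auto. apply HU. split; simpl; auto.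
      - apply isd_scal. apply isd_id. }
    match goal with |- ?a = ?b => change (@eq R a b) end. simpl. unfold pd1, pd2. simpl. ring.
  - intros s Hs'. apply HM. auto.
Qed.

Lemma Eval w : length w = 1%nat -> forall p, Binf1 p ->
  Rabs (pdw w g p - pdw w g (0, 0)) <= 2 * delta.
Proof.
  intros Hw [p1 p2] [H1 H2]. simpl in H1, H2.
  assert (R0 : Rabs 0 <= 1) by (rewrite Rabs_R0; lra).
  assert (A1 := seg1 w 0 delta 0 p1 p2 ltac:(lia) R0 H1 H2).
  assert (A2 := seg2 w 0 delta 0 p2 0 ltac:(lia) R0 H2 R0).
  assert (B : forall s t, Rabs s <= 1 -> Rabs t <= 1 -> forall b, Rabs (pdw (b :: w) g (s, t) - 0) <= delta).
  { intros s t Hs Ht b. rewrite Rminus_0_r. apply Hbd. simpl; lia. apply HU. split; auto. }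
  specialize (A1 ltac:(intros; apply B; auto)). specialize (A2 ltac:(intros; apply B; auto)).
  rewrite !Rminus_0_r in A1, A2. rewrite Rmult_0_l, Rminus_0_r in A1, A2.
  replace (pdw w g (p1, p2) - pdw w g (0, 0))
    with ((pdw w g (p1, p2) - pdw w g (0, p2)) + (pdw w g (0, p2) - pdw w g (0, 0))) by ring.
  eapply Rle_trans. apply Rabs_triang.
  assert (delta * Rabs p1 <= delta) by (pose proof (Rabs_pos p1); nra).
  assert (delta * Rabs p2 <= delta) by (pose proof (Rabs_pos p2); nra).
  lra.
Qed.

Lemma Jbinf x : J x -> Binf1 (x, F x).
Proof.
  intros Hx. split; simpl. left; apply J_abs; auto.
  eapply Rle_trans. apply F_small with (k := k) (Fd := Fd); auto; lia.
  left; apply J_abs; auto.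
Qed.

Lemma Bc_E r w : length w = 1%nat -> (r + 1 <= N)%nat -> (r <= k)%nat ->
  Bc L r (KE N r * delta) (fun x => Qf w x - pdw w g (0, 0)).
Proof.
  intros Hw Hr1 Hr2. assert (HP := PP_ge2 N).
  assert (HKQ : forall r, 0 < KQ N r).
  { intros r'. unfold KQ. apply Rmult_lt_0_compat. lra. apply pow_lt. lra. }
  assert (Hd : dv (fun x => Qf w x - pdw w g (0, 0)) (fun x => Qf (false :: w) x + Qf (true :: w) x * Fd 1 x)).
  { intros x Hx. eapply isd_val.
    { apply (isd_plus (Qf w) (fun _ => - pdw w g (0, 0))).
      exact (Qf_dv w x ltac:(lia) Hx). apply isd_const. }
    match goal with |- ?a = ?b => change (@eq R a b) end. ring. }
  assert (Hb : bnd (KE N r * delta) (fun x => Qf w x - pdw w g (0, 0))).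
  { intros x Hx. unfold Qf. eapply Rle_trans. apply Eval; auto. apply Jbinf; auto.
    unfold KE. pose proof (HKQ r). nra. }
  destruct r.
  - apply Bc_0_intro with (u' := fun x => Qf (false :: w) x + Qf (true :: w) x * Fd 1 x); auto.
    intros x Hx. eapply Rle_trans. apply Rabs_triang. rewrite Rabs_mult.
    assert (Rabs (Qf (false :: w) x) <= delta) by (apply Hbd; [simpl; lia | apply ptU; auto]).
    assert (Rabs (Qf (true :: w) x) <= delta) by (apply Hbd; [simpl; lia | apply ptU; auto]).
    assert (Rabs (Fd 1 x) <= 1) by (apply HFb; [lia | apply J_I11; auto]).
    pose proof (Rabs_pos (Fd 1 x)). pose proof (Rabs_pos (Qf (true :: w) x)).
    unfold KE. pose proof (HKQ 0%nat). nra.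
  - apply Bc_S_intro with (u' := fun x => Qf (false :: w) x + Qf (true :: w) x * Fd 1 x); auto.
    assert (H1 := Bc_Q r (false :: w) ltac:(simpl; lia) ltac:(simpl; lia) ltac:(lia)).
    assert (H2 := Bc_Q r (true :: w) ltac:(simpl; lia) ltac:(simpl; lia) ltac:(lia)).
    assert (H3 := Bc_le L (k - 1) r _ _ ltac:(lia) (Bc_Fd k F Fd L ltac:(lia) HF HFb HFL (k - 1) 1 ltac:(lia) ltac:(lia))).
    assert (H4 := Bc_multP L N r _ _ _ _ ltac:(lia) H2 H3).
    assert (H5 := Bc_plus L r _ _ _ _ H1 H4).
    eapply Bc_mono; [|exact H5]. unfold KE, KQ. simpl. lra.
Qed.
End SecG.

Ltac req := match goal with |- ?a = ?b => change (@eq R a b) end.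

Definition e0 (N : nat) : R := / (2 * PP N ^ 2).
Definition Ke (N : nat) : R := (1 + PP N) * KE N N.
Definition delta0 (N : nat) : R := Rmin (/ 16) (e0 N / Ke N).
Definition Kw (N : nat) : R := PP N ^ 2 * Ke N.
Fixpoint Kg (N j : nat) : R :=
  match j with
  | O => PP N * KE N N + PP N * (PP N * KE N N) + PP N * Kw N
  | S j' => PP N * Kw N + PP N * Kg N j'
  end.

Lemma KQ_pos N r : 0 < KQ N r.
Proof. unfold KQ. apply Rmult_lt_0_compat. lra. apply pow_lt. pose proof (PP_ge2 N). lra. Qed.
Lemma KQ_mono N r r' : (r <= r')%nat -> KQ N r <= KQ N r'.
Proof. intros. unfold KQ. apply Rmult_le_compat_l. lra. apply Rle_pow. pose proof (PP_ge2 N). lra. auto. Qed.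
Lemma KE_pos N r : 0 < KE N r.
Proof. unfold KE. pose proof (KQ_pos N r). lra. Qed.
Lemma KE_mono N r r' : (r <= r')%nat -> KE N r <= KE N r'.
Proof. intros. unfold KE. pose proof (KQ_mono N r r' H). lra. Qed.
Lemma Ke_pos N : 0 < Ke N.
Proof. unfold Ke. pose proof (PP_ge2 N). pose proof (KE_pos N N). nra. Qed.
Lemma e0_pos N : 0 < e0 N.
Proof. unfold e0. pose proof (PP_ge2 N). apply Rinv_0_lt_compat. nra. Qed.
Lemma e0_small N : e0 N <= / 8.
Proof. unfold e0. pose proof (PP_ge2 N). apply Rinv_le_contravar. lra. simpl. nra. Qed.
Lemma delta0_pos N : 0 < delta0 N.
Proof. unfold delta0. apply Rmin_glb_lt. lra. apply Rdiv_lt_0_compat. apply e0_pos. apply Ke_pos. Qed.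
Lemma Kw_pos N : 0 < Kw N.
Proof. unfold Kw. pose proof (PP_ge2 N). pose proof (Ke_pos N). apply Rmult_lt_0_compat; auto. nra. Qed.
Lemma Kg_pos N j : 0 < Kg N j.
Proof.
  pose proof (PP_ge2 N). pose proof (KE_pos N N). pose proof (Kw_pos N).
  induction j; simpl. nra. nra.
Qed.
Lemma Kg_mono N j j' : (j <= j')%nat -> Kg N j <= Kg N j'.
Proof.
  intros H. induction H. lra. eapply Rle_trans. exact IHle. simpl.
  pose proof (PP_ge2 N). pose proof (Kw_pos N). pose proof (Kg_pos N m). nra.
Qed.

Section Main.
Variables (N k : nat) (U : R * R -> Prop) (phi : R * R -> R * R) (delta : R)
  (F : R -> R) (Fd : nat -> R -> R) (L : bool).
Definition g1 (phi : R * R -> R * R) := fun q => fst (phi q).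
Definition g2 (phi : R * R -> R * R) := fun q => snd (phi q).
Hypothesis Hk : (1 <= k <= N)%nat.
Hypothesis HU : forall p, Binf1 p -> U p.
Hypothesis HC1 : Cm_on (S N) U (g1 phi).
Hypothesis HC2 : Cm_on (S N) U (g2 phi).
Hypothesis Hphi0 : phi (0, 0) = (0, 0).
Hypothesis H11 : pd1 (g1 phi) (0, 0) = 2.
Hypothesis H12 : pd2 (g1 phi) (0, 0) = 0.
Hypothesis H21 : pd1 (g2 phi) (0, 0) = 0.
Hypothesis H22 : pd2 (g2 phi) (0, 0) = 1 / 2.
Hypothesis Hb1 : forall w, (2 <= length w <= S N)%nat -> forall p, U p -> Rabs (pdw w (g1 phi) p) <= delta.
Hypothesis Hb2 : forall w, (2 <= length w <= S N)%nat -> forall p, U p -> Rabs (pdw w (g2 phi) p) <= delta.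
Hypothesis Hdel : 0 < delta.
Hypothesis Hdel0 : delta <= delta0 N.
Hypothesis HF : Ck_I k F Fd.
Hypothesis HF0 : F 0 = 0.
Hypothesis HFb : forall j x, (1 <= j <= k)%nat -> I11 x -> Rabs (Fd j x) <= 1.
Hypothesis HFL : L = true -> lip 1 (Fd k).

Definition bb (phi : R * R -> R * R) (F : R -> R) (Fd : nat -> R -> R) (x : R) :=
  Qf (g1 phi) F (false :: nil) x + Qf (g1 phi) F (true :: nil) x * Fd 1%nat x.
Definition aa (phi : R * R -> R * R) (F : R -> R) (Fd : nat -> R -> R) (x : R) :=
  Qf (g2 phi) F (false :: nil) x + Qf (g2 phi) F (true :: nil) x * Fd 1%nat x.
Definition ww phi F Fd x := / bb phi F Fd x.
Fixpoint gg phi F Fd (j : nat) : R -> R :=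
  match j with
  | O => fun x => aa phi F Fd x * ww phi F Fd x
  | S j' => fun x => Derive (gg phi F Fd j') x * ww phi F Fd x
  end.

Lemma Fd1_bc r : (r <= k - 1)%nat -> Bc L r 1 (Fd 1%nat).
Proof.
  intros Hr. apply Bc_le with (k - 1)%nat; auto.
  apply (Bc_Fd k F Fd L ltac:(lia) HF HFb HFL (k - 1) 1); lia.
Qed.

Lemma Kdel : Ke N * delta <= e0 N.
Proof.
  pose proof (Ke_pos N). assert (delta <= e0 N / Ke N).
  { eapply Rle_trans. exact Hdel0. apply Rmin_r. }
  apply Rmult_le_reg_r with (/ Ke N). apply Rinv_0_lt_compat; auto.
  replace (Ke N * delta * / Ke N) with delta by (field; lra). auto.
Qed.

Lemma eps_bc : Bc L (k - 1) (Ke N * delta) (fun x => bb phi F Fd x - 2).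
Proof.
  assert (E1 := Bc_E N k U (g1 phi) F Fd delta L Hk HU HC1 Hb1 Hdel HF HF0 HFb HFL (k - 1) (false :: nil) eq_refl ltac:(lia) ltac:(lia)).
  assert (E2 := Bc_E N k U (g1 phi) F Fd delta L Hk HU HC1 Hb1 Hdel HF HF0 HFb HFL (k - 1) (true :: nil) eq_refl ltac:(lia) ltac:(lia)).
  assert (H3 := Bc_multP L N (k - 1) _ _ _ _ ltac:(lia) E2 (Fd1_bc (k - 1) ltac:(lia))).
  assert (H4 := Bc_plus L _ _ _ _ _ E1 H3).
  eapply Bc_mono; [|eapply Bc_ext; [|exact H4]].
  - unfold Ke. pose proof (KE_mono N (k - 1) N ltac:(lia)). pose proof (PP_ge2 N).
    replace (KE N (k - 1) * delta + PP N * (KE N (k - 1) * delta) * 1) with ((1 + PP N) * (KE N (k - 1) * delta)) by ring.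
    rewrite Rmult_assoc. apply Rmult_le_compat_l. lra. apply Rmult_le_compat_r; lra.
  - intros x Hx. unfold bb.
    change (pdw (false :: nil) (g1 phi) (0, 0)) with (pd1 (g1 phi) (0, 0)).
    change (pdw (true :: nil) (g1 phi) (0, 0)) with (pd2 (g1 phi) (0, 0)).
    rewrite H11, H12. ring.
Qed.

Lemma eps_val x : J x -> Rabs (bb phi F Fd x - 2) <= / 8.
Proof.
  intros Hx. eapply Rle_trans. apply (Bc_bnd _ _ _ _ eps_bc); auto.
  pose proof Kdel. pose proof (e0_small N). lra.
Qed.

Lemma bb_pos x : J x -> 15 / 8 <= bb phi F Fd x <= 17 / 8.
Proof. intros Hx. pose proof (eps_val x Hx). apply Rabs_def2b in H. lra. Qed.

Lemma ww_bc : Bc L (k - 1) (Kw N * delta) (fun x => ww phi F Fd x - / 2).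
Proof.
  assert (H := Bc_recip L N (k - 1) (Ke N * delta) _ ltac:(lia) Kdel eps_bc).
  eapply Bc_mono; [|eapply Bc_ext; [|exact H]].
  - unfold Kw. right. ring.
  - intros x Hx. unfold ww. replace (2 + (bb phi F Fd x - 2)) with (bb phi F Fd x) by ring. auto.
Qed.

Lemma ww1_bc r : (r <= k - 1)%nat -> Bc L r 1 (ww phi F Fd).
Proof.
  intros Hr. apply Bc_le with (k - 1)%nat; auto.
  eapply Bc_mono; [|eapply Bc_ext; [|apply Bc_plus; [exact ww_bc | apply (Bc_const L (k - 1) (/2) (/2))]]].
  - assert (Kw N * delta <= / 2).
    { unfold Kw. pose proof Kdel. pose proof (PP_ge2 N).
      apply Rle_trans with (PP N ^ 2 * e0 N).
      rewrite Rmult_assoc. apply Rmult_le_compat_l. simpl; nra. auto.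
      unfold e0. right. field. simpl. nra. }
    lra.
  - intros x Hx. simpl. ring.
  - rewrite Rabs_pos_eq; lra.
Qed.


Lemma inv_pow2_le j : Rabs (/ 2 ^ j) <= 1.
Proof.
  rewrite Rabs_pos_eq. rewrite <- Rinv_1. apply Rinv_le_contravar. lra.
  apply pow_R1_Rle; lra. left; apply Rinv_0_lt_compat, pow_lt; lra.
Qed.

Lemma gg_main : forall j, (j + 1 <= k)%nat -> exists eta,
  Bc L (k - 1 - j) (Kg N j * delta) eta /\
  forall x, J x -> gg phi F Fd j x = / 2 ^ (j + 2) * Fd (S j) x + eta x.
Proof.
  pose proof (PP_ge2 N) as HP. pose proof (Kw_pos N). pose proof (KE_pos N N).
  pose proof (KE_mono N (k - 1) N ltac:(lia)). pose proof (KE_pos N (k - 1)).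
  induction j; intros Hj.
  - assert (E3 := Bc_E N k U (g2 phi) F Fd delta L Hk HU HC2 Hb2 Hdel HF HF0 HFb HFL (k - 1) (false :: nil) eq_refl ltac:(lia) ltac:(lia)).
    assert (E4 := Bc_E N k U (g2 phi) F Fd delta L Hk HU HC2 Hb2 Hdel HF HF0 HFb HFL (k - 1) (true :: nil) eq_refl ltac:(lia) ltac:(lia)).
    assert (W1 := ww1_bc (k - 1) ltac:(lia)).
    assert (F1 := Fd1_bc (k - 1) ltac:(lia)).
    assert (T1 := Bc_multP L N (k - 1) _ _ _ _ ltac:(lia) E3 W1).
    assert (T2 := Bc_multP L N (k - 1) _ _ _ _ ltac:(lia) (Bc_multP L N (k - 1) _ _ _ _ ltac:(lia) E4 F1) W1).
    assert (T3 := Bc_scal L _ _ (/ 2) _ (Bc_multP L N (k - 1) _ _ _ _ ltac:(lia) F1 ww_bc)).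
    assert (T := Bc_plus L _ _ _ _ _ (Bc_plus L _ _ _ _ _ T1 T2) T3).
    eexists. split.
    + rewrite Nat.sub_0_r. eapply Bc_mono; [|exact T]. simpl.
      rewrite Rabs_pos_eq by lra.
      assert (A1 : PP N * (KE N (k - 1) * delta) * 1 <= PP N * KE N N * delta).
      { rewrite Rmult_1_r, Rmult_assoc. apply Rmult_le_compat_l. lra. apply Rmult_le_compat_r; lra. }
      assert (A2 : PP N * (PP N * (KE N (k - 1) * delta) * 1) * 1 <= PP N * (PP N * KE N N) * delta).
      { rewrite !Rmult_1_r. rewrite (Rmult_assoc (PP N) (PP N * KE N N)). apply Rmult_le_compat_l. lra.
        rewrite Rmult_assoc. apply Rmult_le_compat_l. lra. apply Rmult_le_compat_r; lra. }
      assert (A3 : / 2 * (PP N * 1 * (Kw N * delta)) <= PP N * Kw N * delta).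
      { assert (0 <= PP N * Kw N * delta) by (apply Rmult_le_pos; [apply Rmult_le_pos|]; lra).
        replace (/ 2 * (PP N * 1 * (Kw N * delta))) with (/ 2 * (PP N * Kw N * delta)) by ring. lra. }
      lra.
    + intros x Hx. simpl. unfold aa.
      change (pdw (false :: nil) (g2 phi) (0, 0)) with (pd1 (g2 phi) (0, 0)).
      change (pdw (true :: nil) (g2 phi) (0, 0)) with (pd2 (g2 phi) (0, 0)).
      rewrite H21, H22. field.
  - destruct (IHj ltac:(lia)) as [eta [Heta Eeta]].
    replace (k - 1 - j)%nat with (S (k - 1 - S j)) in Heta by lia.
    destruct Heta as [_ [_ [eta' [Hd Heta']]]].
    assert (HD : forall x, J x -> Derive (gg phi F Fd j) x = / 2 ^ (j + 2) * Fd (S (S j)) x + eta' x).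
    { intros x Hx. apply is_derive_unique.
      apply is_derive_ext_loc with (f := fun x => / 2 ^ (j + 2) * Fd (S j) x + eta x).
      - eapply filter_imp; [|apply locally_J; exact Hx]. simpl. intros y Hy. rewrite Eeta; auto.
      - apply isd_plus. apply isd_scal. apply (Fd_dv k F Fd); auto. lia. apply Hd; auto. }
    assert (F2 := Bc_Fd k F Fd L ltac:(lia) HF HFb HFL (k - 1 - S j) (S (S j)) ltac:(lia) ltac:(lia)).
    assert (W0 := Bc_le L (k - 1) (k - 1 - S j) _ _ ltac:(lia) ww_bc).
    assert (W1 := ww1_bc (k - 1 - S j) ltac:(lia)).
    assert (T1 := Bc_scal L _ _ (/ 2 ^ (j + 2)) _ (Bc_multP L N (k - 1 - S j) _ _ _ _ ltac:(lia) F2 W0)).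
    assert (T2 := Bc_multP L N (k - 1 - S j) _ _ _ _ ltac:(lia) Heta' W1).
    assert (T := Bc_plus L _ _ _ _ _ T1 T2).
    eexists. split.
    + eapply Bc_mono; [|exact T]. simpl.
      pose proof (inv_pow2_le (j + 2)). pose proof (Kg_pos N j).
      assert (Rabs (/ 2 ^ (j + 2)) * (PP N * 1 * (Kw N * delta)) <= PP N * Kw N * delta).
      { replace (PP N * Kw N * delta) with (1 * (PP N * 1 * (Kw N * delta))) by ring.
        apply Rmult_le_compat_r; auto. rewrite Rmult_1_r. apply Rmult_le_pos; [|apply Rmult_le_pos]; lra. }
      assert (PP N * (Kg N j * delta) * 1 = PP N * Kg N j * delta) by ring. lra.
    + intros x Hx. simpl. rewrite HD; auto.
      replace (S (j + 2)) with (S (j + 2)) by lia.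
      replace (j + 2)%nat with (S (S j)) by lia. simpl.
      assert (0 < 2 ^ j) by (apply pow_lt; lra). field. lra.
Qed.

Lemma gg_dv j x : (j + 1 < k)%nat -> J x -> is_derive (gg phi F Fd j) x (Derive (gg phi F Fd j) x).
Proof.
  intros Hj Hx. apply Derive_correct.
  destruct (gg_main j ltac:(lia)) as [eta [Heta Eeta]].
  replace (k - 1 - j)%nat with (S (k - 1 - S j)) in Heta by lia.
  destruct Heta as [_ [_ [eta' [Hd _]]]].
  exists (/ 2 ^ (j + 2) * Fd (S (S j)) x + eta' x).
  apply is_derive_ext_loc with (f := fun x => / 2 ^ (j + 2) * Fd (S j) x + eta x).
  - eapply filter_imp; [|apply locally_J; exact Hx]. simpl. intros y Hy. rewrite Eeta; auto.
  - apply isd_plus. apply isd_scal. apply (Fd_dv k F Fd); auto. lia. apply Hd; auto.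
Qed.

Lemma gg_cont j x : (j + 1 <= k)%nat -> J x -> continuous (gg phi F Fd j) x.
Proof.
  intros Hj Hx.
  destruct (gg_main j ltac:(lia)) as [eta [Heta Eeta]].
  apply continuous_ext_loc with (g := fun x => / 2 ^ (j + 2) * Fd (S j) x + eta x).
  - eapply filter_imp; [|apply locally_J; exact Hx]. simpl. intros y Hy. rewrite Eeta; auto.
  - apply (continuous_plus (fun x => / 2 ^ (j + 2) * Fd (S j) x) eta).
    + apply (continuous_mult (fun _ => / 2 ^ (j + 2)) (Fd (S j))). apply continuous_const.
      apply (Fd_cont k F Fd); auto. lia.
    + eapply Bc_cnt; eauto.
Qed.

Definition hh phi F := Qf (g1 phi) F nil.

Lemma hh_dv x : J x -> is_derive (hh phi F) x (bb phi F Fd x).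
Proof.
  intros Hx. unfold hh, bb.
  exact (Qf_dv N k U (g1 phi) F Fd Hk HU HC1 HF HF0 HFb nil x ltac:(simpl; lia) Hx).
Qed.

Lemma P2_dv x : J x -> is_derive (Qf (g2 phi) F nil) x (aa phi F Fd x).
Proof.
  intros Hx. unfold aa.
  exact (Qf_dv N k U (g2 phi) F Fd Hk HU HC2 HF HF0 HFb nil x ltac:(simpl; lia) Hx).
Qed.

Lemma hh0 : hh phi F 0 = 0.
Proof. unfold hh, Qf, g1. simpl. rewrite HF0, Hphi0. reflexivity. Qed.

Lemma hh_inc x y : J x -> J y -> x <= y -> 15 / 8 * (y - x) <= hh phi F y - hh phi F x.
Proof.
  intros Hx Hy Hxy.
  assert (Hm : forall s, Rmin x y <= s <= Rmax x y -> is_derive (hh phi F) s (bb phi F Fd s)).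
  { intros s Hs. apply hh_dv. exact (Rmin_Rmax_J x y s Hx Hy Hs). }
  destruct (mvt_eq (hh phi F) (bb phi F Fd) x y Hm) as [c [Hc E]].
  rewrite E. assert (J c) by exact (Rmin_Rmax_J x y c Hx Hy Hc).
  pose proof (bb_pos c H). nra.
Qed.

Lemma hh_inj x y : J x -> J y -> 15 / 8 * Rabs (y - x) <= Rabs (hh phi F y - hh phi F x).
Proof.
  intros Hx Hy. destruct (Rle_dec x y).
  - pose proof (hh_inc x y Hx Hy r). rewrite !Rabs_pos_eq; lra.
  - pose proof (hh_inc y x Hy Hx ltac:(lra)).
    rewrite <- (Rabs_Ropp (y - x)), <- (Rabs_Ropp (hh phi F y - hh phi F x)).
    rewrite !Rabs_pos_eq; lra.
Qed.

Definition Xf phi F (y : R) : R := epsilon (inhabits 0) (fun x => J x /\ hh phi F x = y).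

Lemma X_spec y : Rabs y < 3 / 2 -> J (Xf phi F y) /\ hh phi F (Xf phi F y) = y.
Proof.
  intros Hy. unfold Xf. apply epsilon_spec.
  assert (Hm : J (-(9/10))) by (unfold J; lra).
  assert (Hp : J (9/10)) by (unfold J; lra).
  pose proof (hh_inc (-(9/10)) 0 Hm J0 ltac:(lra)). pose proof (hh_inc 0 (9/10) J0 Hp ltac:(lra)).
  rewrite hh0 in *. apply Rabs_def2 in Hy.
  destruct (Ranalysis5.IVT_interv (fun x => hh phi F x - y) (-(9/10)) (9/10)) as [z [Hz Ez]].
  - intros a Ha. apply continuity_pt_filterlim.
    apply (isd_cont (fun x => hh phi F x - y) a (bb phi F Fd a + 0)).
    apply (is_derive_ext (fun t => hh phi F t + - y)). intros t; reflexivity.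
    apply (isd_plus (hh phi F) (fun _ => - y)). apply hh_dv. unfold J; lra. apply isd_const.
  - lra.
  - simpl. lra.
  - simpl. lra.
  - exists z. split. unfold J; lra. simpl in Ez. lra.
Qed.

Lemma X_lip y y' : Rabs y < 3 / 2 -> Rabs y' < 3 / 2 ->
  Rabs (Xf phi F y - Xf phi F y') <= 8 / 15 * Rabs (y - y').
Proof.
  intros Hy Hy'. destruct (X_spec y Hy) as [J1 E1]. destruct (X_spec y' Hy') as [J2 E2].
  pose proof (hh_inj _ _ J2 J1). rewrite E1, E2 in H. lra.
Qed.

Lemma X_dv y : Rabs y < 3 / 2 -> is_derive (Xf phi F) y (ww phi F Fd (Xf phi F y)).
Proof.
  intros Hy. destruct (X_spec y Hy) as [Jx0 Ex0].
  set (x0 := Xf phi F y) in *.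
  pose proof (bb_pos x0 Jx0) as Hb0.
  apply is_derive_Reals. intros eps Heps.
  assert (Hh := proj1 (is_derive_Reals _ _ _) (hh_dv x0 Jx0)).
  destruct (Hh eps Heps) as [rho Hrho].
  assert (Hd : 0 < Rmin (15 / 8 * rho) (3 / 2 - Rabs y)).
  { apply Rmin_glb_lt. pose proof (cond_pos rho). lra. lra. }
  exists (mkposreal _ Hd). simpl. intros t Ht0 Ht.
  pose proof (Rmin_l (15 / 8 * rho) (3 / 2 - Rabs y)).
  pose proof (Rmin_r (15 / 8 * rho) (3 / 2 - Rabs y)).
  assert (Hyt : Rabs (y + t) < 3 / 2).
  { eapply Rle_lt_trans. apply Rabs_triang. lra. }
  destruct (X_spec (y + t) Hyt) as [J1 E1].
  set (x1 := Xf phi F (y + t)) in *.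
  set (s := x1 - x0).
  assert (Hs : 15 / 8 * Rabs s <= Rabs t).
  { pose proof (hh_inj x0 x1 Jx0 J1). rewrite E1, Ex0 in H1.
    replace (y + t - y) with t in H1 by ring. exact H1. }
  assert (Hs0 : s <> 0).
  { intros Hs0. assert (x1 = x0) by (unfold s in Hs0; lra).
    rewrite H1, Ex0 in E1. apply Ht0. lra. }
  assert (Hsr : Rabs s < rho).
  { pose proof (Rabs_pos s). lra. }
  specialize (Hrho s Hs0 Hsr).
  replace (x0 + s) with x1 in Hrho by (unfold s; ring).
  rewrite E1, Ex0 in Hrho. replace (y + t - y) with t in Hrho by ring.
  set (q := t / s) in *.
  assert (Hq : 15 / 8 <= q).
  { pose proof (hh_inc). unfold q.
    destruct (Rle_dec x0 x1).
    - pose proof (hh_inc x0 x1 Jx0 J1 r). rewrite E1, Ex0 in H2.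
      assert (0 < s) by (unfold s; destruct r; [lra| exfalso; apply Hs0; unfold s; lra]).
      apply Rmult_le_reg_r with s; auto. replace (t / s * s) with t by (field; auto).
      unfold s in *. lra.
    - pose proof (hh_inc x1 x0 J1 Jx0 ltac:(lra)). rewrite E1, Ex0 in H2.
      assert (s < 0) by (unfold s; lra).
      apply Rmult_le_reg_r with (- s); [lra|].
      replace (t / s * - s) with (- t) by (field; auto). unfold s in *. lra. }
  replace (t + 0) with t by ring. fold x0.
  replace ((x1 - x0) / t - ww phi F Fd x0) with ((bb phi F Fd x0 - q) / (q * bb phi F Fd x0)).
  2:{ unfold ww, q. fold s. field. repeat split; try lra; auto. }
  unfold Rdiv. rewrite Rabs_mult, Rabs_inv, (Rabs_pos_eq (q * bb phi F Fd x0)) by nra.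
  rewrite <- Rabs_Ropp. replace (- (bb phi F Fd x0 - q)) with (q - bb phi F Fd x0) by ring.
  apply Rle_lt_trans with (Rabs (q - bb phi F Fd x0) * 1).
  - apply Rmult_le_compat_l. apply Rabs_pos. rewrite <- Rinv_1. apply Rinv_le_contravar. lra. nra.
  - lra.
Qed.

Definition Gf phi F y := Qf (g2 phi) F nil (Xf phi F y).
Definition Gdf phi F Fd (j : nat) (y : R) : R :=
  match j with O => Gf phi F y | S j' => gg phi F Fd j' (Xf phi F y) end.

Lemma Gd_dv j y : (j < k)%nat -> Rabs y < 3 / 2 -> is_derive (Gdf phi F Fd j) y (Gdf phi F Fd (S j) y).
Proof.
  intros Hj Hy. destruct (X_spec y Hy) as [Jx _].
  destruct j as [|j'].
  - eapply isd_val.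
    { apply (isd_comp (Qf (g2 phi) F nil) (Xf phi F) y). apply P2_dv; auto. apply X_dv; auto. }
    reflexivity.
  - eapply isd_val.
    { apply (isd_comp (gg phi F Fd j') (Xf phi F) y). apply gg_dv; auto. lia. apply X_dv; auto. }
    reflexivity.
Qed.

Lemma Gd_cont j y : (j <= k)%nat -> Rabs y < 3 / 2 -> continuous (Gdf phi F Fd j) y.
Proof.
  intros Hj Hy. destruct (X_spec y Hy) as [Jx _].
  destruct j as [|j'].
  - eapply isd_cont. apply Gd_dv; auto. lia.
  - apply (continuous_comp (Xf phi F) (gg phi F Fd j')).
    + eapply isd_cont. apply X_dv; auto.
    + apply gg_cont; auto. lia.
Qed.

Lemma I11_abs y : I11 y -> Rabs y < 3 / 2.
Proof. unfold I11; intros; apply Rabs_def1; lra. Qed.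

Lemma Ck_G : Ck_I k (Gf phi F) (Gdf phi F Fd).
Proof.
  split; [|split].
  - intros x _. reflexivity.
  - intros j Hj x Hx. apply der_I. apply Gd_dv; auto. apply I11_abs; auto.
  - intros j Hj x Hx. apply cont_to_I. apply Gd_cont; auto. apply I11_abs; auto.
Qed.

Lemma inv_pow2_4 j : / 2 ^ (j + 2) <= / 4.
Proof.
  apply Rinv_le_contravar. lra. replace (j + 2)%nat with (S (S j)) by lia. simpl.
  assert (1 <= 2 ^ j) by (apply pow_R1_Rle; lra). lra.
Qed.

Lemma Gd_bound M : (forall j x, (1 <= j <= k)%nat -> I11 x -> Rabs (Fd j x) <= M) ->
  forall j y, (1 <= j <= k)%nat -> I11 y -> Rabs (Gdf phi F Fd j y) <= / 4 * M + Kg N N * delta.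
Proof.
  intros HM j y Hj Hy. destruct (X_spec y (I11_abs y Hy)) as [Jx _].
  destruct j as [|j']. lia.
  destruct (gg_main j' ltac:(lia)) as [eta [Heta Eeta]].
  simpl. rewrite Eeta; auto.
  eapply Rle_trans. apply Rabs_triang. rewrite Rabs_mult.
  assert (A1 : Rabs (Fd (S j') (Xf phi F y)) <= M) by (apply HM; auto; apply J_I11; auto).
  assert (A2 : Rabs (eta (Xf phi F y)) <= Kg N j' * delta) by (eapply Bc_bnd; eauto).
  assert (A3 : Kg N j' <= Kg N N) by (apply Kg_mono; lia).
  pose proof (inv_pow2_4 j'). rewrite Rabs_pos_eq by (left; apply Rinv_0_lt_compat, pow_lt; lra).
  assert (0 < / 2 ^ (j' + 2)) by (apply Rinv_0_lt_compat, pow_lt; lra).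
  pose proof (Rabs_pos (Fd (S j') (Xf phi F y))).
  assert (/ 2 ^ (j' + 2) * Rabs (Fd (S j') (Xf phi F y)) <= / 4 * M) by (apply Rmult_le_compat; lra).
  nra.
Qed.

Lemma Gd_lip j M : L = true -> S j = k ->
  (forall x x', I11 x -> I11 x' -> x <> x' -> Rabs (Fd (S j) x - Fd (S j) x') / Rabs (x - x') <= M) ->
  forall y y', I11 y -> I11 y' -> y <> y' ->
  Rabs (Gdf phi F Fd (S j) y - Gdf phi F Fd (S j) y') / Rabs (y - y') <= / 4 * M + Kg N N * delta.
Proof.
  intros HL Hj HM y y' Hy Hy' Hyy.
  assert (HM0 : 0 <= M).
  { assert (Hq := HM 0 (1/2) ltac:(unfold I11; lra) ltac:(unfold I11; lra) ltac:(lra)).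
    eapply Rle_trans; [|exact Hq]. unfold Rdiv. apply Rmult_le_pos. apply Rabs_pos.
    left; apply Rinv_0_lt_compat, Rabs_pos_lt; lra. }
  destruct (X_spec y (I11_abs y Hy)) as [Jx _]. destruct (X_spec y' (I11_abs y' Hy')) as [Jx' _].
  destruct (gg_main j ltac:(lia)) as [eta [Heta Eeta]].
  replace (k - 1 - j)%nat with 0%nat in Heta by lia.
  destruct Heta as [_ [_ Hlip]]. specialize (Hlip HL).
  assert (Hyy0 : 0 < Rabs (y - y')) by (apply Rabs_pos_lt; lra).
  pose proof (Kg_pos N N). pose proof (Kg_mono N j N ltac:(lia)).
  apply Rmult_le_reg_r with (Rabs (y - y')); auto.
  unfold Rdiv. rewrite Rmult_assoc, Rinv_l by lra. rewrite Rmult_1_r.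
  simpl. rewrite !Eeta; auto.
  set (x := Xf phi F y) in *. set (x' := Xf phi F y') in *.
  assert (HX : Rabs (x - x') <= 8 / 15 * Rabs (y - y')) by (apply X_lip; apply I11_abs; auto).
  assert (HF1 : Rabs (Fd (S j) x - Fd (S j) x') <= M * Rabs (x - x')).
  { destruct (Req_dec x x') as [E|E].
    - rewrite E. unfold Rminus. rewrite !Rplus_opp_r, Rabs_R0. lra.
    - assert (Hq := HM x x' (J_I11 _ Jx) (J_I11 _ Jx') E).
      assert (0 < Rabs (x - x')) by (apply Rabs_pos_lt; lra).
      apply Rmult_le_reg_r with (/ Rabs (x - x')). apply Rinv_0_lt_compat; auto.
      replace (M * Rabs (x - x') * / Rabs (x - x')) with M by (field; lra). exact Hq. }
  assert (He : Rabs (eta x - eta x') <= Kg N j * delta * Rabs (x - x')) by (apply Hlip; auto).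
  replace (/ 2 ^ (j + 2) * Fd (S j) x + eta x - (/ 2 ^ (j + 2) * Fd (S j) x' + eta x'))
    with (/ 2 ^ (j + 2) * (Fd (S j) x - Fd (S j) x') + (eta x - eta x')) by ring.
  eapply Rle_trans. apply Rabs_triang. rewrite Rabs_mult.
  pose proof (inv_pow2_4 j). rewrite Rabs_pos_eq by (left; apply Rinv_0_lt_compat, pow_lt; lra).
  assert (0 < / 2 ^ (j + 2)) by (apply Rinv_0_lt_compat, pow_lt; lra).
  pose proof (Rabs_pos (x - x')).
  assert (A1 : / 2 ^ (j + 2) * Rabs (Fd (S j) x - Fd (S j) x') <= / 4 * M * Rabs (x - x')).
  { apply Rle_trans with (/ 2 ^ (j + 2) * (M * Rabs (x - x'))).
    apply Rmult_le_compat_l; lra. rewrite <- Rmult_assoc. apply Rmult_le_compat_r; auto.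
    apply Rmult_le_compat_r; auto. }
  assert (A2 : Kg N j * delta * Rabs (x - x') <= Kg N N * delta * Rabs (x - x')).
  { apply Rmult_le_compat_r; auto. apply Rmult_le_compat_r; lra. }
  assert (A3 : (/ 4 * M + Kg N N * delta) * Rabs (x - x') <= (/ 4 * M + Kg N N * delta) * Rabs (y - y')).
  { apply Rmult_le_compat_l. assert (0 <= Kg N N * delta) by nra. lra. lra. }
  lra.
Qed.

Lemma F_bound1 x1 : I11 x1 -> Rabs (F x1) <= 1.
Proof.
  intros Hx1. destruct (Rle_dec (Rabs (F x1)) 1) as [H|H]; auto. exfalso.
  apply Rnot_le_lt in H. set (eps := Rabs (F x1) - 1).
  assert (Heps : 0 < eps) by (unfold eps; lra).
  destruct HF as [HF1 [_ HF3]].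
  assert (Hc := HF3 0%nat ltac:(lia) x1 Hx1).
  unfold cont_I, filterlim, filter_le, filtermap, within in Hc.
  destruct (Hc (fun z => ball (Fd 0%nat x1) eps z)) as [d Hd].
  { exists (mkposreal eps Heps). intros z Hz; exact Hz. }
  set (m := Rmin d 1).
  assert (Hm : 0 < m) by (unfold m; apply Rmin_glb_lt; [apply cond_pos | lra]).
  assert (Hm1 : m <= 1) by apply Rmin_r. assert (Hmd : m <= d) by apply Rmin_l.
  set (y := x1 * (1 - m / 2)).
  assert (Ha : Rabs x1 <= 1) by (apply Rabs_le; unfold I11 in Hx1; lra).
  assert (Hy : Rabs y <= 1 - m / 2).
  { unfold y. rewrite Rabs_mult, (Rabs_pos_eq (1 - m / 2)) by lra.
    pose proof (Rabs_pos x1). nra. }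
  assert (Jy : J y) by (apply Rabs_def2b in Hy; unfold J; lra).
  assert (Hyx : Rabs (y - x1) < d).
  { unfold y. replace (x1 * (1 - m / 2) - x1) with (x1 * (- (m / 2))) by ring.
    rewrite Rabs_mult, Rabs_Ropp, (Rabs_pos_eq (m / 2)) by lra. pose proof (Rabs_pos x1). nra. }
  assert (Hb := Hd y ltac:(apply ballR; exact Hyx) (J_I11 _ Jy)).
  assert (Hb3 := proj1 (ballR _ _ _) Hb). clear Hb. rename Hb3 into Hb.
  rewrite (HF1 y (J_I11 _ Jy)), (HF1 x1 Hx1) in Hb.
  assert (Hs := F_small k F Fd ltac:(lia) HF HF0 HFb y Jy).
  pose proof (Rabs_triang_inv (F x1) (F y)).
  rewrite <- Rabs_Ropp in Hb. replace (- (F y - F x1)) with (F x1 - F y) in Hb by ring.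
  unfold eps in Hb. lra.
Qed.

Lemma g1_approx p : Binf1 p -> Rabs (g1 phi p - 2 * fst p) <= 4 * delta.
Proof.
  destruct p as [p1 p2]. intros [Hp1 Hp2]. simpl in *.
  assert (R0 : Rabs 0 <= 1) by (rewrite Rabs_R0; lra).
  assert (A1 := seg1 N U (g1 phi) HU HC1 nil 2 (2 * delta) 0 p1 p2 ltac:(simpl; lia) R0 Hp1 Hp2).
  assert (A2 := seg2 N U (g1 phi) HU HC1 nil 0 (2 * delta) 0 p2 0 ltac:(simpl; lia) R0 Hp2 R0).
  assert (E1 : forall q, Binf1 q -> Rabs (pdw (false :: nil) (g1 phi) q - 2) <= 2 * delta).
  { intros q Hq. pose proof (Eval N k U (g1 phi) delta Hk HU HC1 Hb1 Hdel (false :: nil) eq_refl q Hq) as E.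
    change (pdw (false :: nil) (g1 phi) (0, 0)) with (pd1 (g1 phi) (0, 0)) in E. rewrite H11 in E. exact E. }
  assert (E2 : forall q, Binf1 q -> Rabs (pdw (true :: nil) (g1 phi) q - 0) <= 2 * delta).
  { intros q Hq. pose proof (Eval N k U (g1 phi) delta Hk HU HC1 Hb1 Hdel (true :: nil) eq_refl q Hq) as E.
    change (pdw (true :: nil) (g1 phi) (0, 0)) with (pd2 (g1 phi) (0, 0)) in E. rewrite H12 in E. exact E. }
  specialize (A1 ltac:(intros s Hs; apply E1; split; simpl; auto)).
  specialize (A2 ltac:(intros s Hs; apply E2; split; simpl; auto)).
  simpl in A1, A2. rewrite !Rminus_0_r in A1, A2.
  assert (G0 : g1 phi (0, 0) = 0) by (unfold g1; rewrite Hphi0; reflexivity).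
  replace (g1 phi (p1, p2) - 2 * p1)
    with ((g1 phi (p1, p2) - g1 phi (0, p2) - 2 * p1) + (g1 phi (0, p2) - g1 phi (0, 0) - 0 * p2))
    by (rewrite G0; ring).
  eapply Rle_trans. apply Rabs_triang.
  assert (2 * delta * Rabs p1 <= 2 * delta) by (pose proof (Rabs_pos p1); nra).
  assert (2 * delta * Rabs p2 <= 2 * delta) by (pose proof (Rabs_pos p2); nra).
  lra.
Qed.

Lemma endpoint x1 : Rabs x1 <= 1 -> Rabs (hh phi F x1) <= 1 -> J x1.
Proof.
  intros H1 H2. destruct (Rlt_dec (Rabs x1) 1) as [H|H].
  - apply Rabs_def2 in H. unfold J; lra.
  - exfalso. assert (Rabs x1 = 1) by lra.
    assert (Hb : Binf1 (x1, F x1)).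
    { split; simpl. lra. apply F_bound1. unfold I11. apply Rabs_def2b in H1. lra. }
    pose proof (g1_approx _ Hb) as H3. simpl in H3. unfold hh, Qf in H2. simpl in H2.
    assert (delta <= / 16) by (eapply Rle_trans; [exact Hdel0 | apply Rmin_l]).
    set (gv := g1 phi (x1, F x1)) in *.
    pose proof (Rabs_triang (2 * x1 - gv) gv) as H7.
    replace (2 * x1 - gv + gv) with (2 * x1) in H7 by ring.
    rewrite Rabs_mult, H0, Rabs_pos_eq in H7 by lra.
    rewrite <- Rabs_Ropp in H3. replace (- (gv - 2 * x1)) with (2 * x1 - gv) in H3 by ring.
    assert (Rabs gv <= 1) by (unfold gv, g1; exact H2).
    lra.
Qed.

Lemma graph_G : graph_transform phi F (Gf phi F).
Proof.
  intros [y1 y2]. simpl. split.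
  - intros [Hy1 [x1 [Hx1 Ephi]]]. split; auto.
    assert (Eh : hh phi F x1 = y1) by (unfold hh, Qf, g1; simpl; rewrite Ephi; reflexivity).
    assert (Jx1 : J x1) by (apply endpoint; auto; rewrite Eh; auto).
    assert (Hy : Rabs y1 < 3 / 2) by lra.
    destruct (X_spec y1 Hy) as [JX EX].
    assert (EXx : Xf phi F y1 = x1).
    { pose proof (hh_inj _ _ Jx1 JX). rewrite EX, Eh in H. unfold Rminus in H.
      rewrite Rplus_opp_r, Rabs_R0 in H. pose proof (Rabs_pos (Xf phi F y1 + - x1)).
      assert (Rabs (Xf phi F y1 + - x1) = 0) by lra. apply Rabs_eq_0 in H1. lra. }
    unfold Gf, Qf, g2. simpl. rewrite EXx, Ephi. reflexivity.
  - intros [Hy1 Hy2]. split; auto.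
    assert (Hy : Rabs y1 < 3 / 2) by lra.
    destruct (X_spec y1 Hy) as [JX EX].
    exists (Xf phi F y1). split. left; apply J_abs; auto.
    rewrite (surjective_pairing (phi (Xf phi F y1, F (Xf phi F y1)))).
    unfold hh, Qf, g1 in EX. simpl in EX. rewrite EX, Hy2. reflexivity.
Qed.

Lemma graph_unique G' : graph_transform phi F G' -> forall x, I11 x -> G' x = Gf phi F x.
Proof.
  intros HG x Hx.
  assert (Hax : Rabs x <= 1) by (apply Rabs_le; unfold I11 in Hx; lra).
  destruct (proj2 (graph_G (x, Gf phi F x)) (conj Hax eq_refl)) as [_ Hex].
  destruct (proj1 (HG (x, Gf phi F x)) (conj Hax Hex)) as [_ E].
  simpl in E. auto.
Qed.

End Main.

Lemma lub_fin (E : R -> Prop) e : E e -> Rbar_le (Lub_Rbar E) 1 ->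
  exists M, Lub_Rbar E = Finite M /\ (forall y, E y -> y <= M) /\ M <= 1.
Proof.
  intros He Hl. destruct (Lub_Rbar_correct E) as [Hub _].
  destruct (Lub_Rbar E) as [r| |] eqn:Eq.
  - exists r. refine (conj eq_refl (conj _ _)). intros y Hy. apply (Hub y Hy). exact Hl.
  - simpl in Hl. contradiction.
  - specialize (Hub e He). simpl in Hub. contradiction.
Qed.

Lemma lub_le (E : R -> Prop) b : (forall y, E y -> y <= b) -> Rbar_le (Lub_Rbar E) (Finite b).
Proof.
  intros H. destruct (Lub_Rbar_correct E) as [_ Hl]. apply Hl. intros y Hy. apply H; auto.
Qed.

Theorem lemma2p4 :
  forall N : nat, (1 <= N)%nat ->
  exists delta0 C : R, 0 < delta0 /\ 0 < C /\
  forall (U V : R * R -> Prop) (phi : R * R -> R * R) (delta : R),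
    open U -> open V ->
    (forall p, Binf1 p -> U p /\ V p) ->
    Cm_diffeo_onto_image (S N) U V phi ->
    phi (0, 0) = (0, 0) ->
    pd1 (fun p => fst (phi p)) (0, 0) = 2 ->
    pd2 (fun p => fst (phi p)) (0, 0) = 0 ->
    pd1 (fun p => snd (phi p)) (0, 0) = 0 ->
    pd2 (fun p => snd (phi p)) (0, 0) = 1 / 2 ->
    (forall w : list bool, (2 <= length w <= S N)%nat -> forall p, U p ->
       Rabs (pdw w (fun q => fst (phi q)) p) <= delta /\
       Rabs (pdw w (fun q => snd (phi q)) p) <= delta) ->
    0 < delta -> delta <= delta0 ->
    forall (k : nat), (1 <= k <= N)%nat ->
    forall (F : R -> R) (Fd : nat -> R -> R),
      Ck_I k F Fd -> F 0 = 0 -> Rbar_le (Ck_norm k Fd) 1 ->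
      exists G : R -> R,
        graph_transform phi F G /\
        (forall G' : R -> R, graph_transform phi F G' ->
           forall x, I11 x -> G' x = G x) /\
        exists Gd : nat -> R -> R,
          Ck_I k G Gd /\
          Rbar_le (Ck_norm k Gd)
            (Rbar_plus (Rbar_mult (/ 4) (Ck_norm k Fd)) (C * delta)) /\
          (Rbar_le (Ck1_norm k Fd) 1 ->
           Rbar_le (Ck1_norm k Gd)
             (Rbar_plus (Rbar_mult (/ 4) (Ck1_norm k Fd)) (C * delta))).
Proof.
  intros N HN. exists (delta0 N), (Kg N N + 1).
  split. apply delta0_pos. split. pose proof (Kg_pos N N). lra.
  intros U V phi delta _ _ HUV Hdiff Hphi0 H11 H12 H21 H22 Hbd Hdel Hdel0 k Hk F Fd HF HF0 Hnorm.
  assert (HU : forall p, Binf1 p -> U p) by (intros p Hp; apply (HUV p Hp)).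
  destruct Hdiff as [_ [[HC1 HC2] _]].
  change (Cm_on (S N) U (g1 phi)) in HC1. change (Cm_on (S N) U (g2 phi)) in HC2.
  change (pd1 (g1 phi) (0, 0) = 2) in H11. change (pd2 (g1 phi) (0, 0) = 0) in H12.
  change (pd1 (g2 phi) (0, 0) = 0) in H21. change (pd2 (g2 phi) (0, 0) = 1 / 2) in H22.
  assert (Hb1 : forall w, (2 <= length w <= S N)%nat -> forall p, U p -> Rabs (pdw w (g1 phi) p) <= delta)
    by (intros; apply Hbd; auto).
  assert (Hb2 : forall w, (2 <= length w <= S N)%nat -> forall p, U p -> Rabs (pdw w (g2 phi) p) <= delta)
    by (intros; apply Hbd; auto).
  assert (HI0 : I11 0) by (unfold I11; lra).
  assert (LF := fun H => lub_fin _ (Rabs (Fd 1%nat 0)) H Hnorm).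
  destruct LF as [M [EM [HM HM1]]].
  { exists 1%nat, 0. split; [lia | split; auto]. }
  assert (HFM : forall j x, (1 <= j <= k)%nat -> I11 x -> Rabs (Fd j x) <= M).
  { intros j x Hj Hx. apply HM. exists j, x. auto. }
  assert (HFb : forall j x, (1 <= j <= k)%nat -> I11 x -> Rabs (Fd j x) <= 1).
  { intros j x Hj Hx. pose proof (HFM j x Hj Hx). lra. }
  assert (HFL0 : false = true -> lip 1 (Fd k)) by discriminate.
  exists (Gf phi F). split.
  { exact (graph_G N k U phi delta F Fd false Hk HU HC1 Hphi0 H11 H12 Hb1 Hdel Hdel0 HF HF0 HFb HFL0). }
  split.
  { exact (graph_unique N k U phi delta F Fd false Hk HU HC1 Hphi0 H11 H12 Hb1 Hdel Hdel0 HF HF0 HFb HFL0). }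
  exists (Gdf phi F Fd). split.
  { exact (Ck_G N k U phi delta F Fd false Hk HU HC1 HC2 Hphi0 H11 H12 H21 H22 Hb1 Hb2 Hdel Hdel0 HF HF0 HFb HFL0). }
  pose proof (Kg_pos N N) as HKg.
  split.
  { unfold Ck_norm at 2. rewrite EM. simpl. apply lub_le.
    intros y [j [x [Hj [Hx Ey]]]]. subst y.
    pose proof (Gd_bound N k U phi delta F Fd false Hk HU HC1 HC2 Hphi0 H11 H12 H21 H22 Hb1 Hb2 Hdel Hdel0 HF HF0 HFb HFL0 M HFM j x Hj Hx).
    nra. }
  intros Hn1.
  assert (LF := fun H => lub_fin _ (Rabs (Fd 1%nat 0)) H Hn1).
  destruct LF as [M1 [EM1 [HM' HM1']]].
  { left. exists 1%nat, 0. split; [lia | split; auto]. }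
  assert (HFM1 : forall j x, (1 <= j <= k)%nat -> I11 x -> Rabs (Fd j x) <= M1).
  { intros j x Hj Hx. apply HM'. left. exists j, x. auto. }
  assert (HLq : forall x x', I11 x -> I11 x' -> x <> x' -> Rabs (Fd k x - Fd k x') / Rabs (x - x') <= M1).
  { intros x x' Hx Hx' Hne. apply HM'. right. exists x, x'. auto. }
  assert (HFL1 : true = true -> lip 1 (Fd k)).
  { intros _ x y Hx Hy. destruct (Req_dec x y) as [E|E].
    - subst. unfold Rminus. rewrite !Rplus_opp_r, Rabs_R0. lra.
    - pose proof (HLq x y (J_I11 _ Hx) (J_I11 _ Hy) E).
      assert (0 < Rabs (x - y)) by (apply Rabs_pos_lt; lra).
      apply Rmult_le_reg_r with (/ Rabs (x - y)). apply Rinv_0_lt_compat; auto.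
      replace (1 * Rabs (x - y) * / Rabs (x - y)) with 1 by (field; lra).
      unfold Rdiv in H. lra. }
  unfold Ck1_norm at 2. rewrite EM1. simpl. apply lub_le.
  intros y [[j [x [Hj [Hx Ey]]]] | [x [x' [Hx [Hx' [Hne Ey]]]]]]; subst y.
  - pose proof (Gd_bound N k U phi delta F Fd false Hk HU HC1 HC2 Hphi0 H11 H12 H21 H22 Hb1 Hb2 Hdel Hdel0 HF HF0 HFb HFL0 M1 HFM1 j x Hj Hx).
    nra.
  - destruct k as [|j]. lia.
    pose proof (Gd_lip N (S j) U phi delta F Fd true Hk HU HC1 HC2 Hphi0 H11 H12 H21 H22 Hb1 Hb2 Hdel Hdel0 HF HF0 HFb HFL1 j M1 eq_refl eq_refl HLq x x' Hx Hx' Hne).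
    nra.
Qed.
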